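(* Let $B$ be a Banach left $A$-module having a bounded left approximate identity $(e_\alpha)_\alpha\subseteq A$, and suppose $wap_\ell(B)=B^*$. Then $B^*$ factors on the left with respect to $A$, i.e. $B^*A=B^*$.
   Context: $A$ is a Banach algebra and $B$ a Banach left $A$-module with action $\pi_\ell(a,b)=ab$. A bounded left approximate identity for $B$ is a bounded net $(e_\alpha)\subseteq A$ with $e_\alpha a\to a$ for all $a\in A$ and $e_\alpha b\to b$ for all $b\in B$. For $b'\in B^*$, $a\in A$, $b'a=\pi_\ell^*(b',a)\in B^*$ is $\langle b'a,b\rangle=\langle b',ab\rangle$, and $B^*A=\{b'a:b'\in B^*,a\in A\}$. For a bounded bilinear $m:X\times Y\to Z$: $\langle m^*(z',x),y\rangle=\langle z',m(x,y)\rangle$, $\langle m^{**}(y'',z'),x\rangle=\langle y'',m^*(z',x)\rangle$, $\langle m^{***}(x'',y''),z'\rangle=\langle x'',m^{**}(y'',z')\rangle$; $m^t(y,x)=m(x,y)$, $m^{t***t}(x'',y'')=(m^t)^{***}(y'',x'')$. $wap_\ell(B)=\{b'\in B^*:\langle\pi_\ell^{***}(a'',b''),b'\rangle=\langle\pi_\ell^{t***t}(a'',b''),b'\rangle$ for all $a''\in A^{**},b''\in B^{**}\}$. *)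

(* Defs.v *)
From Stdlib Require Import Reals.
Open Scope R_scope.

Record Cx := mkC { Re : R; Im : R }.
Definition C0 : Cx := mkC 0 0.
Definition Cadd (z w : Cx) : Cx := mkC (Re z + Re w) (Im z + Im w).
Definition Cmul (z w : Cx) : Cx :=
  mkC (Re z * Re w - Im z * Im w) (Re z * Im w + Im z * Re w).
Definition Cabs (z : Cx) : R := sqrt (Re z * Re z + Im z * Im z).

Record CBanach := {
  car :> Type;
  vzero : car;
  vadd : car -> car -> car;
  vopp : car -> car;
  vscal : Cx -> car -> car;
  vnorm : car -> R;
  vadd_assoc : forall x y z, vadd x (vadd y z) = vadd (vadd x y) z;
  vadd_comm : forall x y, vadd x y = vadd y x;
  vadd_0 : forall x, vadd x vzero = x;
  vadd_opp : forall x, vadd x (vopp x) = vzero;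
  vscal_1 : forall x, vscal (mkC 1 0) x = x;
  vscal_assoc : forall a b x, vscal a (vscal b x) = vscal (Cmul a b) x;
  vscal_addl : forall a b x, vscal (Cadd a b) x = vadd (vscal a x) (vscal b x);
  vscal_addr : forall a x y, vscal a (vadd x y) = vadd (vscal a x) (vscal a y);
  vnorm_nonneg : forall x, 0 <= vnorm x;
  vnorm_eq0 : forall x, vnorm x = 0 -> x = vzero;
  vnorm_scal : forall a x, vnorm (vscal a x) = Cabs a * vnorm x;
  vnorm_triangle : forall x y, vnorm (vadd x y) <= vnorm x + vnorm y;
  vcomplete : forall u : nat -> car,
    (forall eps, 0 < eps -> exists N, forall m n, (N <= m)%nat -> (N <= n)%nat ->
        vnorm (vadd (u m) (vopp (u n))) < eps) ->
    exists l, forall eps, 0 < eps -> exists N, forall n, (N <= n)%nat ->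
        vnorm (vadd (u n) (vopp l)) < eps
}.

Arguments vzero {c}. Arguments vadd {c}. Arguments vopp {c}.
Arguments vscal {c}. Arguments vnorm {c}.

Definition is_dual (X : CBanach) (f : X -> Cx) : Prop :=
  (forall x y, f (vadd x y) = Cadd (f x) (f y)) /\
  (forall a x, f (vscal a x) = Cmul a (f x)) /\
  (exists M, forall x, Cabs (f x) <= M * vnorm x).

Definition dual_bound (X : CBanach) (f : X -> Cx) (c : R) : Prop :=
  forall x, Cabs (f x) <= c * vnorm x.

Definition is_bidual (X : CBanach) (F : (X -> Cx) -> Cx) : Prop :=
  (forall f g, is_dual X f -> is_dual X g ->
      F (fun x => Cadd (f x) (g x)) = Cadd (F f) (F g)) /\
  (forall a f, is_dual X f -> F (fun x => Cmul a (f x)) = Cmul a (F f)) /\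
  (exists M, forall f c, is_dual X f -> dual_bound X f c -> Cabs (F f) <= M * c).

Section Arens.
Context {X Y Z : Type} (m : X -> Y -> Z).
(* <m^*(z',x), y> = <z', m(x,y)> *)
Definition adj1 (z' : Z -> Cx) (x : X) : Y -> Cx := fun y => z' (m x y).
(* <m^**(y'',z'), x> = <y'', m^*(z',x)> *)
Definition adj2 (y'' : (Y -> Cx) -> Cx) (z' : Z -> Cx) : X -> Cx :=
  fun x => y'' (adj1 z' x).
(* <m^***(x'',y''), z'> = <x'', m^**(y'',z')> *)
Definition adj3 (x'' : (X -> Cx) -> Cx) (y'' : (Y -> Cx) -> Cx) : (Z -> Cx) -> Cx :=
  fun z' => x'' (adj2 y'' z').
End Arens.

Definition flip {X Y Z : Type} (m : X -> Y -> Z) : Y -> X -> Z := fun y x => m x y.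
(* m^{t***t}(x'',y'') = (m^t)^{***}(y'',x'') *)
Definition adj3t {X Y Z : Type} (m : X -> Y -> Z)
  (x'' : (X -> Cx) -> Cx) (y'' : (Y -> Cx) -> Cx) : (Z -> Cx) -> Cx :=
  adj3 (flip m) y'' x''.

Record BanachAlgebra := {
  ba_sp :> CBanach;
  amul : ba_sp -> ba_sp -> ba_sp;
  amul_addl : forall a b c, amul (vadd a b) c = vadd (amul a c) (amul b c);
  amul_addr : forall a b c, amul a (vadd b c) = vadd (amul a b) (amul a c);
  amul_scall : forall t a b, amul (vscal t a) b = vscal t (amul a b);
  amul_scalr : forall t a b, amul a (vscal t b) = vscal t (amul a b);
  amul_assoc : forall a b c, amul a (amul b c) = amul (amul a b) c;
  amul_norm : forall a b, vnorm (amul a b) <= vnorm a * vnorm b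
}.
Arguments amul {b0} _ _ : rename.

Record BanachLeftModule (A : BanachAlgebra) := {
  bm_sp :> CBanach;
  act : A -> bm_sp -> bm_sp;
  act_addl : forall a a' b, act (vadd a a') b = vadd (act a b) (act a' b);
  act_addr : forall a b b', act a (vadd b b') = vadd (act a b) (act a b');
  act_scall : forall t a b, act (vscal t a) b = vscal t (act a b);
  act_scalr : forall t a b, act a (vscal t b) = vscal t (act a b);
  act_assoc : forall a a' b, act a (act a' b) = act (amul a a') b;
  act_norm : forall a b, vnorm (act a b) <= vnorm a * vnorm b
}.
Arguments act {A b} _ _ : rename.

Definition has_bounded_left_approx_identity (A : BanachAlgebra)
  (B : BanachLeftModule A) : Prop :=
  exists (I : Type) (le : I -> I -> Prop) (e : I -> A),
    (exists i : I, True) /\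
    (forall i, le i i) /\
    (forall i j k, le i j -> le j k -> le i k) /\
    (forall i j, exists k, le i k /\ le j k) /\
    (exists M, forall i, vnorm (e i) <= M) /\
    (forall a : A, forall eps, 0 < eps -> exists i0, forall i, le i0 i ->
        vnorm (vadd (amul (e i) a) (vopp a)) < eps) /\
    (forall b : B, forall eps, 0 < eps -> exists i0, forall i, le i0 i ->
        vnorm (vadd (act (e i) b) (vopp b)) < eps).

(* b' a := pi_l^*(b', a), i.e. <b' a, b> = <b', a b> *)
Definition dual_act (A : BanachAlgebra) (B : BanachLeftModule A)
  (b' : B -> Cx) (a : A) : B -> Cx :=
  adj1 (fun (a0 : A) (b0 : B) => act a0 b0) b' a.

Definition in_wap_l (A : BanachAlgebra) (B : BanachLeftModule A) (b' : B -> Cx) : Prop :=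
  is_dual B b' /\
  forall (a'' : (A -> Cx) -> Cx) (b'' : (B -> Cx) -> Cx),
    is_bidual A a'' -> is_bidual B b'' ->
    adj3 (fun (a0 : A) (b0 : B) => act a0 b0) a'' b'' b' =
    adj3t (fun (a0 : A) (b0 : B) => act a0 b0) a'' b'' b'.

(* Main.v *)
Require Import Defs.
From Stdlib Require Import Reals Lra Lia Psatz Classical ClassicalEpsilon FunctionalExtensionality PropExtensionality.
Open Scope R_scope.

Lemma Cx_ext (z w : Cx) : Re z = Re w -> Im z = Im w -> z = w.
Proof. destruct z, w; simpl; intros; subst; reflexivity. Qed.

Ltac cx := apply Cx_ext; simpl; ring.

Lemma ss_nonneg x y : 0 <= x*x + y*y.
Proof. pose proof (Rle_0_sqr x); pose proof (Rle_0_sqr y); unfold Rsqr in *; lra. Qed.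

Lemma Cabs_nonneg z : 0 <= Cabs z.
Proof. unfold Cabs; apply sqrt_pos. Qed.

Lemma Cabs_Re z : Rabs (Re z) <= Cabs z.
Proof.
  unfold Cabs. rewrite <- sqrt_Rsqr_abs. apply sqrt_le_1_alt. unfold Rsqr. nra.
Qed.
Lemma Cabs_Im z : Rabs (Im z) <= Cabs z.
Proof.
  unfold Cabs. rewrite <- sqrt_Rsqr_abs. apply sqrt_le_1_alt. unfold Rsqr. nra.
Qed.

Lemma Cabs_real t : Cabs (mkC t 0) = Rabs t.
Proof. unfold Cabs; simpl. rewrite <- sqrt_Rsqr_abs. f_equal. unfold Rsqr; ring. Qed.

Lemma Cabs_mul a b : Cabs (Cmul a b) = Cabs a * Cabs b.
Proof.
  unfold Cabs, Cmul; simpl. rewrite <- sqrt_mult by nra. f_equal. ring.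
Qed.

Lemma Cabs_triangle z w : Cabs (Cadd z w) <= Cabs z + Cabs w.
Proof.
  unfold Cabs, Cadd; simpl.
  destruct z as [a b], w as [c d]; simpl.
  pose proof (sqrt_pos (a*a+b*b)). pose proof (sqrt_pos (c*c+d*d)).
  apply Rsqr_incr_0_var; [| nra].
  rewrite Rsqr_sqrt by apply ss_nonneg. unfold Rsqr.
  replace ((sqrt (a * a + b * b) + sqrt (c * c + d * d)) *
   (sqrt (a * a + b * b) + sqrt (c * c + d * d))) with
   (sqrt (a*a+b*b) * sqrt (a*a+b*b) + sqrt (c*c+d*d)*sqrt (c*c+d*d)
     + 2 * (sqrt (a*a+b*b) * sqrt (c*c+d*d))) by ring.
  rewrite !sqrt_sqrt by apply ss_nonneg. rewrite <- sqrt_mult by apply ss_nonneg.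
  assert (a*c+b*d <= sqrt ((a*a+b*b)*(c*c+d*d))).
  { destruct (Rle_or_lt (a*c+b*d) 0). pose proof (sqrt_pos ((a*a+b*b)*(c*c+d*d))); lra.
    rewrite <- (sqrt_Rsqr (a*c+b*d)) by lra. apply sqrt_le_1_alt. unfold Rsqr.
    pose proof (Rle_0_sqr (a*d-b*c)); unfold Rsqr in *; nra. }
  lra.
Qed.

Lemma Cabs_C0 : Cabs C0 = 0.
Proof. unfold Cabs, C0; simpl. replace (0*0+0*0) with 0 by ring. apply sqrt_0. Qed.

Lemma Cabs_le_sum z : Cabs z <= Rabs (Re z) + Rabs (Im z).
Proof.
  unfold Cabs. destruct z as [a b]; simpl.
  rewrite <- (sqrt_Rsqr (Rabs a + Rabs b)) by (pose proof (Rabs_pos a); pose proof (Rabs_pos b); lra).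
  apply sqrt_le_1_alt. unfold Rsqr.
  pose proof (Rabs_pos a); pose proof (Rabs_pos b).
  assert (a*a = Rabs a * Rabs a) by (rewrite <- Rabs_mult; rewrite Rabs_pos_eq; nra).
  assert (b*b = Rabs b * Rabs b) by (rewrite <- Rabs_mult; rewrite Rabs_pos_eq; nra).
  nra.
Qed.

Lemma Cabs_eq0 z : Cabs z = 0 -> z = C0.
Proof.
  intro H. pose proof (Cabs_Re z). pose proof (Cabs_Im z). rewrite H in *.
  pose proof (Rabs_pos (Re z)); pose proof (Rabs_pos (Im z)).
  apply Cx_ext; simpl. destruct (Req_dec (Re z) 0); auto; exfalso; apply (Rabs_no_R0 _ H4); lra.
  destruct (Req_dec (Im z) 0); auto; exfalso; apply (Rabs_no_R0 _ H4); lra.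
Qed.

Section Ban.
Variable X : CBanach.
Implicit Types x y z : X.

Lemma vadd_0l x : vadd vzero x = x.
Proof. rewrite vadd_comm; apply vadd_0. Qed.

Lemma vadd_cancel x y z : vadd x y = vadd x z -> y = z.
Proof.
  intro H. assert (vadd (vopp x) (vadd x y) = vadd (vopp x) (vadd x z)) by (rewrite H; auto).
  rewrite !vadd_assoc in H0. rewrite (vadd_comm _ (vopp x) x), vadd_opp, !vadd_0l in H0. exact H0.
Qed.

Lemma vscal_0 x : vscal C0 x = vzero.
Proof.
  apply (vadd_cancel (vscal C0 x)). rewrite vadd_0, <- vscal_addl.
  f_equal. cx.
Qed.

Lemma vscal_m1 x : vscal (mkC (-1) 0) x = vopp x.
Proof.
  apply (vadd_cancel x). rewrite vadd_opp.
  rewrite <- (vscal_1 X x) at 1. rewrite <- vscal_addl.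
  replace (Cadd (mkC 1 0) (mkC (-1) 0)) with C0 by cx. apply vscal_0.
Qed.

Lemma vnorm_0 : vnorm (@vzero X) = 0.
Proof.
  rewrite <- (vscal_0 vzero), vnorm_scal, Cabs_C0. ring.
Qed.

Lemma vnorm_opp x : vnorm (vopp x) = vnorm x.
Proof. rewrite <- vscal_m1, vnorm_scal, Cabs_real. rewrite Rabs_left by lra. ring. Qed.

Lemma vopp_add x y : vopp (vadd x y) = vadd (vopp x) (vopp y).
Proof. rewrite <- !vscal_m1. apply vscal_addr. Qed.

Lemma vopp_opp x : vopp (vopp x) = x.
Proof. apply (vadd_cancel (vopp x)). rewrite vadd_opp, vadd_comm, vadd_opp. auto. Qed.

Lemma vnorm_sub_sym x y : vnorm (vadd x (vopp y)) = vnorm (vadd y (vopp x)).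
Proof.
  rewrite <- vnorm_opp, vopp_add, vopp_opp, vadd_comm. auto.
Qed.

Lemma vnorm_sub_tri x y z :
  vnorm (vadd x (vopp z)) <= vnorm (vadd x (vopp y)) + vnorm (vadd y (vopp z)).
Proof.
  eapply Rle_trans; [| apply vnorm_triangle].
  right. f_equal. rewrite <- !vadd_assoc. f_equal.
  rewrite vadd_assoc, (vadd_comm _ (vopp y) y), vadd_opp, vadd_0l. auto.
Qed.

Lemma vnorm_scal_real t x : vnorm (vscal (mkC t 0) x) = Rabs t * vnorm x.
Proof. rewrite vnorm_scal, Cabs_real; auto. Qed.

Lemma vnorm_convex t x y : 0 <= t <= 1 ->
  vnorm (vadd (vscal (mkC t 0) x) (vscal (mkC (1-t) 0) y)) <= t * vnorm x + (1-t) * vnorm y.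
Proof.
  intro Ht. eapply Rle_trans; [apply vnorm_triangle|].
  rewrite !vnorm_scal_real, !Rabs_pos_eq by lra. lra.
Qed.

End Ban.

Section Dual.
Variable X : CBanach.

Lemma dual_0 (f : X -> Cx) : is_dual X f -> f vzero = C0.
Proof.
  intros [Ha _]. specialize (Ha vzero vzero). rewrite vadd_0 in Ha.
  destruct (f vzero) as [a b] eqn:E. unfold Cadd in Ha; simpl in Ha. injection Ha; intros.
  unfold C0; f_equal; lra.
Qed.

Lemma dual_opp (f : X -> Cx) x : is_dual X f -> f (vopp x) = mkC (- Re (f x)) (- Im (f x)).
Proof.
  intros Hf. pose proof Hf as [_ [Hs _]]. rewrite <- vscal_m1, Hs. cx.
Qed.

Lemma dual_sub (f : X -> Cx) x y : is_dual X f ->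
  f (vadd x (vopp y)) = mkC (Re (f x) - Re (f y)) (Im (f x) - Im (f y)).
Proof.
  intros Hf. pose proof Hf as [Ha _]. rewrite Ha, dual_opp by auto. cx.
Qed.

Lemma dual_scal_real (f : X -> Cx) t x : is_dual X f ->
  f (vscal (mkC t 0) x) = mkC (t * Re (f x)) (t * Im (f x)).
Proof. intros [_ [Hs _]]. rewrite Hs. cx. Qed.

Lemma dual_bound_exists (f : X -> Cx) : is_dual X f -> exists M, 0 <= M /\ dual_bound X f M.
Proof.
  intros [_ [_ [M HM]]]. exists (Rabs M). split. apply Rabs_pos.
  intro x. eapply Rle_trans. apply HM. apply Rmult_le_compat_r. apply vnorm_nonneg. apply RRle_abs.
Qed.

End Dual.

Lemma Cabs_opp z : Cabs (mkC (- Re z) (- Im z)) = Cabs z.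
Proof. unfold Cabs; simpl. f_equal. ring. Qed.

Lemma Cabs_sub_le z w : Cabs w <= Cabs (Cadd z w) + Cabs z.
Proof.
  replace w with (Cadd (Cadd z w) (mkC (- Re z) (- Im z))) at 1 by cx.
  eapply Rle_trans. apply Cabs_triangle. rewrite Cabs_opp. lra.
Qed.

Section Ban2.
Variable X : CBanach.
Lemma vadd_swap4 (p q r s : X) : vadd (vadd p q) (vadd r s) = vadd (vadd p r) (vadd q s).
Proof.
  rewrite !vadd_assoc. f_equal. rewrite <- !vadd_assoc. f_equal. apply vadd_comm.
Qed.

Lemma comb_sub t (a b y : X) :
  vadd (vadd (vscal (mkC t 0) a) (vscal (mkC (1-t) 0) b)) (vopp y) =
  vadd (vscal (mkC t 0) (vadd a (vopp y))) (vscal (mkC (1-t) 0) (vadd b (vopp y))).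
Proof.
  rewrite !vscal_addr, vadd_swap4. f_equal.
  rewrite <- vscal_addl. replace (Cadd (mkC t 0) (mkC (1 - t) 0)) with (mkC 1 0) by cx.
  rewrite vscal_1; auto.
Qed.
Lemma vopp_0 : vopp (@vzero X) = vzero.
Proof. rewrite <- (vadd_0l _ (vopp vzero)). apply vadd_opp. Qed.
Lemma vscal_zero a : vscal a (@vzero X) = vzero.
Proof.
  replace (@vzero X) with (vscal C0 (@vzero X)) at 1 by apply vscal_0.
  rewrite vscal_assoc. replace (Cmul a C0) with C0 by (unfold C0; cx).
  apply vscal_0.
Qed.

Lemma vadd_right_comm (p q r : X) : vadd (vadd p q) r = vadd (vadd p r) q.
Proof. rewrite <- !vadd_assoc. f_equal. apply vadd_comm. Qed.

Lemma ystep_id r c (y g h : X) : r + c = 1 ->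
  vadd (vadd (vadd (vscal (mkC r 0) y) (vscal (mkC c 0) g)) h) (vopp y) =
  vadd (vscal (mkC c 0) (vadd g (vopp y))) h.
Proof.
  intros Hrc.
  assert (E : vopp y = vadd (vscal (mkC r 0) (vopp y)) (vscal (mkC c 0) (vopp y))).
  { rewrite <- vscal_addl. replace (Cadd (mkC r 0) (mkC c 0)) with (mkC 1 0).
    rewrite vscal_1; auto. apply Cx_ext; simpl; lra. }
  rewrite E at 1. rewrite vadd_right_comm, vadd_swap4, <- vscal_addr, vadd_opp, vscal_zero, vadd_0l.
  rewrite vscal_addr. auto.
Qed.
End Ban2.

Section Hausdorff.
Variable P : Type.
Variable le : P -> P -> Prop.
Hypothesis le_refl : forall x, le x x.

Definition incl (C D : P -> Prop) := forall x, C x -> D x.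
Definition chain (C : P -> Prop) := forall x y, C x -> C y -> le x y \/ le y x.
Definition comp_all (C : P -> Prop) (x : P) := forall y, C y -> le y x \/ le x y.

Lemma set_ext (C D : P -> Prop) : incl C D -> incl D C -> C = D.
Proof.
  intros H1 H2. apply functional_extensionality; intro x.
  apply propositional_extensionality; split; auto.
Qed.

Definition gsucc (C : P -> Prop) : P -> Prop :=
  match excluded_middle_informative (exists x, ~ C x /\ comp_all C x) with
  | left H => let x := proj1_sig (constructive_indefinite_description _ H) in
              fun y => C y \/ y = x
  | right _ => C
  end.

Lemma gsucc_incl C : incl C (gsucc C).
Proof.
  unfold gsucc; destruct excluded_middle_informative; intros y Hy; auto.
Qed.

Lemma gsucc_one C D : incl C D -> incl D (gsucc C) -> incl D C \/ incl (gsucc C) D.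
Proof.
  intros H1 H2. unfold gsucc in *. destruct excluded_middle_informative as [H|H].
  - destruct (constructive_indefinite_description _ H) as [x Hx]; simpl in *.
    destruct (classic (D x)).
    + right. intros y [Hy|Hy]; auto. subst; auto.
    + left. intros y Hy. destruct (H2 y Hy); auto. subst; contradiction.
  - left; auto.
Qed.

Lemma gsucc_chain C : chain C -> chain (gsucc C).
Proof.
  intros HC. unfold gsucc. destruct excluded_middle_informative as [H|H]; auto.
  generalize (proj2_sig (constructive_indefinite_description _ H)).
  generalize (proj1_sig (constructive_indefinite_description _ H)). intros x [_ Hx].
  intros a b [Ha|Ha] [Hb|Hb]; subst; auto;
  try (destruct (Hx _ Ha); auto; fail); try (destruct (Hx _ Hb); auto; fail).
Qed.

Inductive tower : (P -> Prop) -> Prop :=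
| tw_g : forall C, tower C -> tower (gsucc C)
| tw_U : forall F : (P -> Prop) -> Prop, (forall C, F C -> tower C) ->
         tower (fun y => exists C, F C /\ C y).

Definition comparable C := forall D, tower D -> incl D C \/ incl C D.

Lemma lemma1 C : tower C -> comparable C -> forall D, tower D -> incl D C \/ incl (gsucc C) D.
Proof.
  intros TC HC D TD. induction TD as [D' TD' IH | F HF IH].
  - destruct IH as [IH|IH].
    + destruct (HC (gsucc D') (tw_g _ TD')) as [H|H].
      * left; auto.
      * destruct (gsucc_one D' C IH H) as [H'|H'].
        -- right. assert (C = D') by (apply set_ext; auto). subst. intros y Hy; auto.
        -- left; auto.
    + right. intros y Hy. apply gsucc_incl. auto.
  - destruct (classic (forall E, F E -> incl E C)) as [H|H].
    + left. intros y [E [HE Hy]]. eapply H; eauto.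
    + right. apply not_all_ex_not in H. destruct H as [E HE].
      apply imply_to_and in HE. destruct HE as [HE1 HE2].
      destruct (IH E HE1) as [H|H]. contradiction.
      intros y Hy. exists E; split; auto.
Qed.

Lemma all_comparable C : tower C -> comparable C.
Proof.
  intro TC. induction TC as [C' TC' IH | F HF IH].
  - intros D TD. destruct (lemma1 C' TC' IH D TD) as [H|H].
    + left. intros y Hy. apply gsucc_incl; auto.
    + right; auto.
  - intros D TD. destruct (classic (forall E, F E -> incl E D)) as [H|H].
    + right. intros y [E [HE Hy]]. eapply H; eauto.
    + left. apply not_all_ex_not in H. destruct H as [E HE].
      apply imply_to_and in HE. destruct HE as [HE1 HE2].
      destruct (IH E HE1 D TD) as [H|H].
      * intros y Hy. exists E; split; auto.
      * contradiction.
Qed.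

Lemma tower_chain C : tower C -> chain C.
Proof.
  intro TC. induction TC as [C' TC' IH | F HF IH].
  - apply gsucc_chain; auto.
  - intros a b [E1 [H1 Ha]] [E2 [H2 Hb]].
    destruct (all_comparable E1 (HF E1 H1) E2 (HF E2 H2)) as [H|H].
    + apply (IH E1 H1); auto.
    + apply (IH E2 H2); auto.
Qed.

Theorem hausdorff : exists M : P -> Prop, chain M /\ forall x, comp_all M x -> M x.
Proof.
  set (M := fun y => exists C, tower C /\ C y).
  assert (TM : tower M) by (apply tw_U; auto).
  exists M. split. apply tower_chain; auto.
  intros x Hx. apply NNPP; intro Hn.
  assert (incl (gsucc M) M).
  { intros y Hy. exists (gsucc M). split; auto. apply tw_g; auto. }
  unfold gsucc in H. destruct excluded_middle_informative as [H1|H1].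
  - revert H. generalize (proj2_sig (constructive_indefinite_description _ H1)).
    generalize (proj1_sig (constructive_indefinite_description _ H1)). intros z [Hz1 Hz2] H.
    apply Hz1. apply H. right; auto.
  - apply H1. exists x; auto.
Qed.

End Hausdorff.

Definition Rsup (E : R -> Prop) : R :=
  match excluded_middle_informative (bound E /\ exists x, E x) with
  | left H => proj1_sig (completeness E (proj1 H) (proj2 H))
  | right _ => 0 end.

Lemma Rsup_spec E : bound E -> (exists x, E x) -> is_lub E (Rsup E).
Proof.
  intros H1 H2. unfold Rsup. destruct excluded_middle_informative as [H|H].
  - apply (proj2_sig (completeness E (proj1 H) (proj2 H))).
  - exfalso; auto.
Qed.

Definition Rinf (E : R -> Prop) : R := - Rsup (fun r => E (- r)).

Lemma Rinf_lb E r m : E r -> (forall r', E r' -> m <= r') -> Rinf E <= r.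
Proof.
  intros Hr Hm. unfold Rinf.
  destruct (Rsup_spec (fun r => E (-r))) as [H1 H2].
  - exists (-m). intros x Hx. specialize (Hm _ Hx). lra.
  - exists (-r). rewrite Ropp_involutive; auto.
  - assert (-r <= Rsup (fun r => E (-r))). apply H1. rewrite Ropp_involutive; auto. lra.
Qed.

Lemma Rinf_glb E m : (exists r, E r) -> (forall r', E r' -> m <= r') -> m <= Rinf E.
Proof.
  intros [r Hr] Hm. unfold Rinf.
  destruct (Rsup_spec (fun r => E (-r))) as [H1 H2].
  - exists (-m). intros x Hx. specialize (Hm _ Hx). lra.
  - exists (-r). rewrite Ropp_involutive; auto.
  - assert (Rsup (fun r => E (-r)) <= -m). apply H2. intros x Hx. specialize (Hm _ Hx). lra. lra.
Qed.

Lemma Rinf_approx E eps : (exists r, E r) -> (exists m, forall r', E r' -> m <= r') -> 0 < eps ->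
  exists r, E r /\ r < Rinf E + eps.
Proof.
  intros Hne [m Hm] He. apply NNPP; intro H.
  assert (Rinf E + eps <= Rinf E). apply Rinf_glb; auto.
  intros r' Hr'. apply Rnot_lt_le. intro. apply H. exists r'; auto. lra.
Qed.

Definition fadd {T} (f g : T -> Cx) : T -> Cx := fun x => Cadd (f x) (g x).
Definition fsc {T} (t : R) (f : T -> Cx) : T -> Cx := fun x => mkC (t * Re (f x)) (t * Im (f x)).
Definition fzero {T} : T -> Cx := fun _ => C0.

Ltac fx := apply functional_extensionality; intro; apply Cx_ext;
  unfold fadd, fsc, fzero, Cadd, C0; simpl.

Section HB.
Variable T : Type.
Notation V := (T -> Cx).
Variable S : V -> Prop.
Variable p : V -> R.
Hypothesis S0 : S fzero.
Hypothesis Sadd : forall u v, S u -> S v -> S (fadd u v).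
Hypothesis Ssc : forall t u, S u -> S (fsc t u).
Hypothesis padd : forall u v, S u -> S v -> p (fadd u v) <= p u + p v.
Hypothesis psc : forall t u, 0 < t -> S u -> p (fsc t u) = t * p u.

Lemma p0 : p fzero = 0.
Proof.
  assert (fsc 2 fzero = (@fzero T)) by (fx; ring).
  pose proof (psc 2 fzero ltac:(lra) S0). rewrite H in H0. lra.
Qed.

Record PF := mkPF {
  dom : V -> Prop;
  val : V -> R;
  dom_S : forall u, dom u -> S u;
  dom_0 : dom fzero;
  dom_add : forall u v, dom u -> dom v -> dom (fadd u v);
  dom_sc : forall t u, dom u -> dom (fsc t u);
  val_add : forall u v, dom u -> dom v -> val (fadd u v) = val u + val v;
  val_sc : forall t u, dom u -> val (fsc t u) = t * val u;
  val_le : forall u, dom u -> val u <= p u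
}.

Definition PFle (q1 q2 : PF) :=
  (forall u, dom q1 u -> dom q2 u) /\ (forall u, dom q1 u -> val q1 u = val q2 u).

Lemma PFle_refl q : PFle q q.
Proof. split; auto. Qed.

Lemma PFle_trans q1 q2 q3 : PFle q1 q2 -> PFle q2 q3 -> PFle q1 q3.
Proof.
  intros [A1 B1] [A2 B2]. split; auto. intros u Hu. rewrite B1, B2; auto.
Qed.

Lemma fsc_zero t : fsc t (@fzero T) = fzero.
Proof. fx; ring. Qed.
Lemma fadd_zero : fadd (@fzero T) fzero = fzero.
Proof. fx; ring. Qed.

Definition base : PF.
Proof.
  refine (mkPF (fun u => u = fzero) (fun _ => 0) _ _ _ _ _ _ _).
  - intros; subst; auto.
  - auto.
  - intros; subst; apply fadd_zero.
  - intros; subst; apply fsc_zero.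
  - intros; ring.
  - intros; ring.
  - intros; subst; rewrite p0; lra.
Defined.

Section Union.
Variable M : PF -> Prop.
Hypothesis Mchain : chain PF PFle M.
Variable q0 : PF.
Hypothesis Mq0 : M q0.

Definition Udom (u : V) := exists q, M q /\ dom q u.
Definition Uval (u : V) : R :=
  match excluded_middle_informative (Udom u) with
  | left H => val (proj1_sig (constructive_indefinite_description _ H)) u
  | right _ => 0 end.

Lemma Uval_spec q u : M q -> dom q u -> Uval u = val q u.
Proof.
  intros Hq Hu. unfold Uval. destruct excluded_middle_informative as [H|H].
  - destruct (constructive_indefinite_description _ H) as [q' [Hq' Hu']]; simpl.
    destruct (Mchain q' q Hq' Hq) as [[_ B]|[_ B]]; auto. symmetry; auto.
  - exfalso; apply H; exists q; auto.
Qed.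

Lemma Udom_two u v : Udom u -> Udom v -> exists q, M q /\ dom q u /\ dom q v.
Proof.
  intros [q1 [H1 D1]] [q2 [H2 D2]].
  destruct (Mchain q1 q2 H1 H2) as [[A _]|[A _]].
  - exists q2; auto.
  - exists q1; auto.
Qed.

Definition Upf : PF.
Proof.
  refine (mkPF Udom Uval _ _ _ _ _ _ _).
  - intros u [q [_ Hq]]. eapply dom_S; eauto.
  - exists q0; split; auto. apply dom_0.
  - intros u v Hu Hv. destruct (Udom_two u v Hu Hv) as [q [Hq [A B]]].
    exists q; split; auto. apply dom_add; auto.
  - intros t u [q [Hq A]]. exists q; split; auto. apply dom_sc; auto.
  - intros u v Hu Hv. destruct (Udom_two u v Hu Hv) as [q [Hq [A B]]].
    rewrite !(Uval_spec q); auto. apply val_add; auto. apply dom_add; auto.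
  - intros t u [q [Hq A]]. rewrite !(Uval_spec q); auto. apply val_sc; auto. apply dom_sc; auto.
  - intros u [q [Hq A]]. rewrite (Uval_spec q); auto. apply val_le; auto.
Defined.

Lemma Upf_ub q : M q -> PFle q Upf.
Proof.
  intro Hq. split.
  - intros u Hu. exists q; auto.
  - intros u Hu. simpl. symmetry. apply Uval_spec; auto.
Qed.
End Union.

Section Ext.
Variable q : PF.
Variable x : V.
Hypothesis Sx : S x.
Hypothesis nx : ~ dom q x.

Definition cset (r : R) := exists y, dom q y /\ r = val q y - p (fadd y (fsc (-1) x)).

Lemma cset_bound y' : dom q y' -> forall r, cset r -> r <= p (fadd y' x) - val q y'.
Proof.
  intros Hy' r [y [Hy ->]].
  assert (fadd y y' = fadd (fadd y (fsc (-1) x)) (fadd y' x)) by (fx; ring).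
  pose proof (val_le q (fadd y y') (dom_add q _ _ Hy Hy')).
  rewrite val_add in H0 by auto. rewrite H in H0.
  pose proof (padd (fadd y (fsc (-1) x)) (fadd y' x)).
  assert (S y) by (eapply dom_S; eauto). assert (S y') by (eapply dom_S; eauto).
  specialize (H1 (Sadd _ _ H2 (Ssc _ _ Sx)) (Sadd _ _ H3 Sx)). lra.
Qed.

Definition cval : R := Rsup cset.

Lemma cval_spec : is_lub cset cval.
Proof.
  apply Rsup_spec.
  - exists (p (fadd fzero x) - val q fzero). intros r Hr. apply (cset_bound fzero (dom_0 q)); auto.
  - eexists. exists fzero. split. apply dom_0. reflexivity.
Qed.

Lemma cval_le y : dom q y -> val q y - p (fadd y (fsc (-1) x)) <= cval.
Proof. intro Hy. apply (proj1 cval_spec). exists y; auto. Qed.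

Lemma cval_ge y : dom q y -> cval <= p (fadd y x) - val q y.
Proof. intro Hy. apply (proj2 cval_spec). intros r Hr. apply (cset_bound y Hy); auto. Qed.

Definition Edom (w : V) := exists yt : V * R, dom q (fst yt) /\ w = fadd (fst yt) (fsc (snd yt) x).

Lemma rep_unique y t y' t' : dom q y -> dom q y' ->
  fadd y (fsc t x) = fadd y' (fsc t' x) -> y = y' /\ t = t'.
Proof.
  intros Hy Hy' E.
  destruct (Req_dec t t') as [Ht|Ht].
  - subst t'. split; auto. apply functional_extensionality; intro b.
    assert (E1 := f_equal (fun f => f b) E). simpl in E1. unfold fadd, fsc, Cadd in E1.
    injection E1; intros. apply Cx_ext; lra.
  - exfalso. apply nx.
    assert (x = fsc (/ (t - t')) (fadd y' (fsc (-1) y))).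
    { apply functional_extensionality; intro b.
      assert (E1 := f_equal (fun f => f b) E). simpl in E1. unfold fadd, fsc, Cadd in E1.
      injection E1; intros. apply Cx_ext; unfold fadd, fsc, Cadd; simpl.
      apply (Rmult_eq_reg_l (t - t')); [|lra]. field_simplify; [|lra]. lra.
      apply (Rmult_eq_reg_l (t - t')); [|lra]. field_simplify; [|lra]. lra. }
    rewrite H. apply dom_sc, dom_add; auto. apply dom_sc; auto.
Qed.

Definition Eval (w : V) : R :=
  match excluded_middle_informative (Edom w) with
  | left H => let yt := proj1_sig (constructive_indefinite_description _ H) in
              val q (fst yt) + snd yt * cval
  | right _ => 0 end.

Lemma Eval_spec y t : dom q y -> Eval (fadd y (fsc t x)) = val q y + t * cval.
Proof.
  intro Hy. unfold Eval. destruct excluded_middle_informative as [H|H].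
  - destruct (constructive_indefinite_description _ H) as [[y' t'] [H1 H2]]; simpl.
    simpl in *. destruct (rep_unique y t y' t' Hy H1 H2). subst; auto.
  - exfalso; apply H. exists (y, t); auto.
Qed.

Lemma Edom_S w : Edom w -> S w.
Proof. intros [[y t] [Hy ->]]. simpl in *. apply Sadd; auto. eapply dom_S; eauto. Qed.

Lemma Eval_le y t : dom q y -> val q y + t * cval <= p (fadd y (fsc t x)).
Proof.
  intro Hy. assert (Sy : S y) by (eapply dom_S; eauto).
  destruct (Rtotal_order t 0) as [Ht|[Ht|Ht]].
  - set (s := - t). assert (0 < s) by (unfold s; lra).
    pose proof (cval_le (fsc (/ s) y) (dom_sc _ _ _ Hy)).
    rewrite val_sc in H0 by auto.
    assert (fadd y (fsc t x) = fsc s (fadd (fsc (/ s) y) (fsc (-1) x))).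
    { fx; unfold s; field; lra. }
    rewrite H1, psc by (auto; apply Sadd; apply Ssc; auto).
    apply (Rmult_le_compat_l s) in H0; [|lra].
    replace (s * (/ s * val q y - p (fadd (fsc (/ s) y) (fsc (-1) x)))) with
      (val q y - s * p (fadd (fsc (/ s) y) (fsc (-1) x))) in H0 by (field; lra).
    unfold s in *. lra.
  - subst. assert (fadd y (fsc 0 x) = y) by (fx; ring). rewrite H.
    pose proof (val_le q y Hy). lra.
  - pose proof (cval_ge (fsc (/ t) y) (dom_sc _ _ _ Hy)).
    rewrite val_sc in H by auto.
    assert (fadd y (fsc t x) = fsc t (fadd (fsc (/ t) y) x)).
    { fx; field; lra. }
    rewrite H0, psc by (auto; apply Sadd; auto).
    apply (Rmult_le_compat_l t) in H; [|lra].
    replace (t * (p (fadd (fsc (/ t) y) x) - / t * val q y)) with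
      (t * p (fadd (fsc (/ t) y) x) - val q y) in H by (field; lra). lra.
Qed.

Definition Epf : PF.
Proof.
  refine (mkPF Edom Eval Edom_S _ _ _ _ _ _).
  - exists (fzero, 0). simpl. split. apply dom_0. fx; ring.
  - intros u v [[y t] [Hy ->]] [[y' t'] [Hy' ->]]. simpl in *.
    exists (fadd y y', t + t'). simpl. split. apply dom_add; auto. fx; ring.
  - intros s u [[y t] [Hy ->]]. simpl in *.
    exists (fsc s y, s * t). simpl. split. apply dom_sc; auto. fx; ring.
  - intros u v [[y t] [Hy ->]] [[y' t'] [Hy' ->]]. simpl in *.
    replace (fadd (fadd y (fsc t x)) (fadd y' (fsc t' x))) with (fadd (fadd y y') (fsc (t+t') x)) by (fx; ring).
    rewrite !Eval_spec; auto. rewrite val_add; auto. ring. apply dom_add; auto.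
  - intros s u [[y t] [Hy ->]]. simpl in *.
    replace (fsc s (fadd y (fsc t x))) with (fadd (fsc s y) (fsc (s*t) x)) by (fx; ring).
    rewrite !Eval_spec; auto. rewrite val_sc; auto. ring. apply dom_sc; auto.
  - intros u [[y t] [Hy ->]]. simpl in *. rewrite Eval_spec; auto. apply Eval_le; auto.
Defined.

Lemma Epf_ge : PFle q Epf.
Proof.
  split.
  - intros u Hu. exists (u, 0). simpl. split; auto. fx; ring.
  - intros u Hu. simpl. replace u with (fadd u (fsc 0 x)) at 2 by (fx; ring).
    rewrite Eval_spec; auto. ring.
Qed.

Lemma Epf_x : dom Epf x.
Proof. exists (fzero, 1). simpl. split. apply dom_0. fx; ring. Qed.
End Ext.

Theorem hahn_banach : exists phi : V -> R,
  (forall u v, S u -> S v -> phi (fadd u v) = phi u + phi v) /\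
  (forall t u, S u -> phi (fsc t u) = t * phi u) /\
  (forall u, S u -> phi u <= p u).
Proof.
  destruct (hausdorff PF PFle PFle_refl) as [M [HM Hmax]].
  assert (Mne : exists q0, M q0).
  { destruct (classic (exists q0, M q0)) as [H|H]; auto.
    exists base. apply Hmax. intros y Hy. exfalso; apply H; eauto. }
  destruct Mne as [q0 Hq0].
  set (U := Upf M HM q0 Hq0).
  assert (Htot : forall u, S u -> dom U u).
  { intros u Su. apply NNPP; intro Hn.
    set (E := Epf U u Su Hn).
    assert (ME : M E).
    { apply Hmax. intros y Hy. left. apply (PFle_trans y U E). apply Upf_ub; auto. apply Epf_ge. }
    pose proof (Upf_ub M HM q0 Hq0 E ME) as [A _]. apply Hn. apply A. apply Epf_x. }
  exists (val U). split; [|split].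
  - intros; apply val_add; auto.
  - intros; apply val_sc; auto.
  - intros; apply val_le; auto.
Qed.

End HB.

Lemma Rinf_sub E1 E2 m : (exists r, E1 r) -> (exists r, E2 r) ->
  (forall r1 r2, E1 r1 -> E2 r2 -> m <= r1 + r2) -> m <= Rinf E1 + Rinf E2.
Proof.
  intros H1 H2 H.
  assert (forall r1, E1 r1 -> m - r1 <= Rinf E2).
  { intros r1 Hr1. apply Rinf_glb; auto. intros r2 Hr2. specialize (H r1 r2 Hr1 Hr2). lra. }
  assert (m - Rinf E2 <= Rinf E1).
  { apply Rinf_glb; auto. intros r1 Hr1. specialize (H0 r1 Hr1). lra. }
  lra.
Qed.

Lemma Rinf_scale E1 E2 t : 0 < t -> (exists r, E1 r) -> (exists m, forall r, E1 r -> m <= r) ->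
  (forall r, E2 r <-> exists r', E1 r' /\ r = t * r') -> Rinf E2 = t * Rinf E1.
Proof.
  intros Ht [r0 Hr0] [m Hm] HE.
  assert (HE2 : exists r, E2 r) by (exists (t * r0); apply HE; eauto).
  assert (HE2b : forall r, E2 r -> t * m <= r).
  { intros r Hr. apply HE in Hr. destruct Hr as [r' [Hr' ->]]. specialize (Hm _ Hr').
    apply Rmult_le_compat_l; lra. }
  apply Rle_antisym.
  - assert (Rinf E2 / t <= Rinf E1).
    { apply Rinf_glb. eauto. intros r' Hr'.
      assert (Rinf E2 <= t * r'). { apply Rinf_lb with (m := t*m); auto. apply HE; eauto. }
      unfold Rdiv. apply (Rmult_le_reg_l t); [lra|].
      replace (t * (Rinf E2 * / t)) with (Rinf E2) by (field; lra). lra. }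
    apply (Rmult_le_reg_l (/ t)). apply Rinv_0_lt_compat; auto.
    replace (/ t * (t * Rinf E1)) with (Rinf E1) by (field; lra).
    unfold Rdiv in H. lra.
  - apply Rinf_glb; auto. intros r Hr. apply HE in Hr. destruct Hr as [r' [Hr' ->]].
    apply Rmult_le_compat_l. lra. apply Rinf_lb with (m := m); auto.
Qed.

Definition fi {T} (u : T -> Cx) : T -> Cx := fun x => Cmul (mkC 0 1) (u x).
Definition fcs {T} (a : Cx) (u : T -> Cx) : T -> Cx := fun x => Cmul a (u x).
Definition cplx {T} (phi : (T -> Cx) -> R) (u : T -> Cx) : Cx := mkC (phi u) (- phi (fi u)).

Section Cplx.
Variable T : Type.
Variable S : (T -> Cx) -> Prop.
Variable phi : (T -> Cx) -> R.
Hypothesis Sadd : forall u v, S u -> S v -> S (fadd u v).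
Hypothesis Ssc : forall t u, S u -> S (fsc t u).
Hypothesis Si : forall u, S u -> S (fi u).
Hypothesis phi_add : forall u v, S u -> S v -> phi (fadd u v) = phi u + phi v.
Hypothesis phi_sc : forall t u, S u -> phi (fsc t u) = t * phi u.

Lemma cplx_add u v : S u -> S v -> cplx phi (fadd u v) = Cadd (cplx phi u) (cplx phi v).
Proof.
  intros Hu Hv. unfold cplx.
  replace (fi (fadd u v)) with (fadd (fi u) (fi v)) by (unfold fi; fx; ring).
  rewrite !phi_add by auto. cx.
Qed.

Lemma cplx_scal a u : S u -> cplx phi (fcs a u) = Cmul a (cplx phi u).
Proof.
  intros Hu. destruct a as [r s]. unfold cplx.
  replace (fcs (mkC r s) u) with (fadd (fsc r u) (fsc s (fi u))) by (unfold fcs, fi, Cmul; fx; ring).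
  replace (fi (fadd (fsc r u) (fsc s (fi u)))) with (fadd (fsc r (fi u)) (fsc (-s) u))
    by (unfold fi, Cmul; fx; ring).
  rewrite !phi_add, !phi_sc by auto. cx.
Qed.

Lemma cplx_Re u : Re (cplx phi u) = phi u.
Proof. reflexivity. Qed.
End Cplx.

Lemma dual_bound_fi (X : CBanach) (u : X -> Cx) c : dual_bound X u c -> dual_bound X (fi u) c.
Proof.
  intros H x. unfold fi. rewrite Cabs_mul. replace (Cabs (mkC 0 1)) with 1. rewrite Rmult_1_l; auto.
  unfold Cabs; simpl. replace (0*0+1*1) with 1 by ring. symmetry; apply sqrt_1.
Qed.

Lemma cplx_bound {T} (phi : (T -> Cx) -> R) u (c : R) :
  Rabs (phi u) <= c -> Rabs (phi (fi u)) <= c -> Cabs (cplx phi u) <= 2 * c.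
Proof.
  intros H1 H2. eapply Rle_trans. apply Cabs_le_sum. unfold cplx; simpl.
  rewrite Rabs_Ropp. lra.
Qed.

Section DualOps.
Variable X : CBanach.
Lemma is_dual_fadd (u v : X -> Cx) : is_dual X u -> is_dual X v -> is_dual X (fadd u v).
Proof.
  intros [a1 [s1 [M1 b1]]] [a2 [s2 [M2 b2]]]. split; [|split].
  - intros x y. unfold fadd. rewrite a1, a2. cx.
  - intros a x. unfold fadd. rewrite s1, s2. cx.
  - exists (Rabs M1 + Rabs M2). intro x. unfold fadd.
    eapply Rle_trans. apply Cabs_triangle.
    pose proof (b1 x); pose proof (b2 x). pose proof (vnorm_nonneg _ x).
    pose proof (RRle_abs M1); pose proof (RRle_abs M2). nra.
Qed.

Lemma is_dual_fcs (a : Cx) (u : X -> Cx) : is_dual X u -> is_dual X (fcs a u).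
Proof.
  intros [a1 [s1 [M1 b1]]]. split; [|split].
  - intros x y. unfold fcs. rewrite a1. cx.
  - intros b x. unfold fcs. rewrite s1. cx.
  - exists (Cabs a * Rabs M1). intro x. unfold fcs. rewrite Cabs_mul.
    pose proof (b1 x). pose proof (vnorm_nonneg _ x). pose proof (Cabs_nonneg a).
    pose proof (RRle_abs M1).
    rewrite Rmult_assoc. apply Rmult_le_compat_l; auto. nra.
Qed.

Lemma fsc_fcs t (u : X -> Cx) : fsc t u = fcs (mkC t 0) u.
Proof. unfold fcs, Cmul; fx; ring. Qed.
Lemma fi_fcs (u : X -> Cx) : fi u = fcs (mkC 0 1) u.
Proof. reflexivity. Qed.

Lemma is_dual_fsc t (u : X -> Cx) : is_dual X u -> is_dual X (fsc t u).
Proof. intro; rewrite fsc_fcs; apply is_dual_fcs; auto. Qed.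
Lemma is_dual_fi (u : X -> Cx) : is_dual X u -> is_dual X (fi u).
Proof. intro; apply is_dual_fcs; auto. Qed.
Lemma is_dual_fzero : is_dual X fzero.
Proof.
  split; [|split]. intros; unfold fzero, C0; cx. intros; unfold fzero, C0; cx.
  exists 0. intro x. unfold fzero. rewrite Cabs_C0. lra.
Qed.

Lemma dual_bound_add (u v : X -> Cx) c1 c2 : dual_bound X u c1 -> dual_bound X v c2 ->
  dual_bound X (fadd u v) (c1 + c2).
Proof.
  intros H1 H2 x. unfold fadd. eapply Rle_trans. apply Cabs_triangle.
  pose proof (H1 x); pose proof (H2 x). lra.
Qed.

Lemma dual_bound_fcs a (u : X -> Cx) c : dual_bound X u c -> dual_bound X (fcs a u) (Cabs a * c).
Proof.
  intros H x. unfold fcs. rewrite Cabs_mul, Rmult_assoc. apply Rmult_le_compat_l.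
  apply Cabs_nonneg. auto.
Qed.

Lemma dual_bound_fsc t (u : X -> Cx) c : dual_bound X u c -> dual_bound X (fsc t u) (Rabs t * c).
Proof. intro H. rewrite fsc_fcs, <- Cabs_real. apply dual_bound_fcs; auto. Qed.

Lemma dual_bound_zero : dual_bound X fzero 0.
Proof. intro x. unfold fzero. rewrite Cabs_C0. lra. Qed.

Lemma dual_bound_mono (u : X -> Cx) c c' : (exists x : X, 0 < vnorm x) ->
  dual_bound X u c -> c <= c' -> dual_bound X u c'.
Proof.
  intros _ H Hc x. eapply Rle_trans. apply H. apply Rmult_le_compat_r. apply vnorm_nonneg. auto.
Qed.

Lemma dual_bound_nonneg (u : X -> Cx) c : (exists x : X, 0 < vnorm x) -> dual_bound X u c -> 0 <= c.
Proof.
  intros [x Hx] H. specialize (H x). pose proof (Cabs_nonneg (u x)).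
  destruct (Rle_or_lt 0 c); auto. nra.
Qed.
End DualOps.

Definition Csub (z w : Cx) : Cx := mkC (Re z - Re w) (Im z - Im w).

Lemma Csub_tri x y z : Cabs (Csub x z) <= Cabs (Csub x y) + Cabs (Csub y z).
Proof.
  replace (Csub x z) with (Cadd (Csub x y) (Csub y z)) by (unfold Csub; cx). apply Cabs_triangle.
Qed.

Lemma Csub_sym x y : Cabs (Csub x y) = Cabs (Csub y x).
Proof. unfold Cabs, Csub; simpl. f_equal. ring. Qed.

Lemma Csub_self x : Cabs (Csub x x) = 0.
Proof. replace (Csub x x) with C0 by (unfold Csub, C0; cx). apply Cabs_C0. Qed.

Lemma Csub_eq0 x y : Cabs (Csub x y) = 0 -> x = y.
Proof.
  intro H. apply Cabs_eq0 in H. unfold Csub, C0 in H. injection H; intros.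
  apply Cx_ext; lra.
Qed.

Lemma geo_tel {T} (dist : T -> T -> R)
  (tri : forall x y z, dist x z <= dist x y + dist y z) (d0 : forall x, dist x x <= 0)
  (u : nat -> T) C r : 0 <= r < 1 ->
  (forall n, dist (u n) (u (S n)) <= C * r ^ n) ->
  forall n m, (n <= m)%nat -> dist (u n) (u m) <= C * (r ^ n - r ^ m) / (1 - r).
Proof.
  intros Hr Hs n m Hnm. induction Hnm.
  - pose proof (d0 (u n)). replace (C * (r ^ n - r ^ n) / (1 - r)) with 0 by (field; lra). auto.
  - eapply Rle_trans. apply (tri _ (u m)). eapply Rle_trans. apply Rplus_le_compat. apply IHHnm. apply Hs.
    right. simpl. field. lra.
Qed.

Lemma pow_small r eps : 0 <= r < 1 -> 0 < eps -> exists N, forall n, (N <= n)%nat -> r ^ n < eps.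
Proof.
  intros Hr He. destruct (pow_lt_1_zero r ltac:(rewrite Rabs_pos_eq; lra) eps He) as [N HN].
  exists N. intros n Hn. specialize (HN n Hn). rewrite Rabs_pos_eq in HN; auto. apply pow_le; lra.
Qed.

Lemma pow_le1 r n : 0 <= r <= 1 -> 0 <= r ^ n <= 1.
Proof.
  intros Hr. induction n; simpl. lra. split. apply Rmult_le_pos; lra. nra.
Qed.

Definition Ccv (u : nat -> Cx) (l : Cx) :=
  forall eps, 0 < eps -> exists N, forall n, (N <= n)%nat -> Cabs (Csub (u n) l) < eps.

Lemma Ccv_exists (u : nat -> Cx) :
  (forall eps, 0 < eps -> exists N, forall n m, (N <= n)%nat -> (N <= m)%nat -> Cabs (Csub (u n) (u m)) < eps) ->
  exists l, Ccv u l.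
Proof.
  intros H.
  assert (HR : Cauchy_crit (fun n => Re (u n))).
  { intros eps He. destruct (H eps He) as [N HN]. exists N. intros n m Hn Hm.
    unfold R_dist. eapply Rle_lt_trans. 2: apply (HN n m); lia.
    pose proof (Cabs_Re (Csub (u n) (u m))). unfold Csub in H0; simpl in H0. auto. }
  assert (HI : Cauchy_crit (fun n => Im (u n))).
  { intros eps He. destruct (H eps He) as [N HN]. exists N. intros n m Hn Hm.
    unfold R_dist. eapply Rle_lt_trans. 2: apply (HN n m); lia.
    pose proof (Cabs_Im (Csub (u n) (u m))). unfold Csub in H0; simpl in H0. auto. }
  destruct (R_complete _ HR) as [lr Hlr]. destruct (R_complete _ HI) as [li Hli].
  exists (mkC lr li). intros eps He.
  destruct (Hlr (eps/2) ltac:(lra)) as [N1 H1]. destruct (Hli (eps/2) ltac:(lra)) as [N2 H2].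
  exists (max N1 N2). intros n Hn. eapply Rle_lt_trans. apply Cabs_le_sum.
  unfold Csub; simpl. specialize (H1 n ltac:(lia)). specialize (H2 n ltac:(lia)).
  unfold R_dist in *. lra.
Qed.

Lemma Ccv_le (u : nat -> Cx) l z C N0 : Ccv u l -> (forall n, (N0 <= n)%nat -> Cabs (Csub (u n) z) <= C) ->
  Cabs (Csub l z) <= C.
Proof.
  intros Hl Hb. apply Rnot_lt_le. intro H.
  destruct (Hl (Cabs (Csub l z) - C) ltac:(lra)) as [N HN].
  specialize (HN (max N N0) ltac:(lia)). specialize (Hb (max N N0) ltac:(lia)).
  pose proof (Csub_tri l (u (max N N0)) z). rewrite Csub_sym in HN. lra.
Qed.

Lemma Ccv_unique u l l' : Ccv u l -> Ccv u l' -> l = l'.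
Proof.
  intros H1 H2. apply Csub_eq0. apply Rle_antisym; [| apply Cabs_nonneg].
  apply Rnot_lt_le. intro H.
  destruct (H1 (Cabs (Csub l l') / 2) ltac:(lra)) as [N1 HN1].
  destruct (H2 (Cabs (Csub l l') / 2) ltac:(lra)) as [N2 HN2].
  specialize (HN1 (max N1 N2) ltac:(lia)). specialize (HN2 (max N1 N2) ltac:(lia)).
  pose proof (Csub_tri l (u (max N1 N2)) l'). rewrite Csub_sym in HN1. lra.
Qed.

Lemma Ccv_add u v l l' : Ccv u l -> Ccv v l' -> Ccv (fun n => Cadd (u n) (v n)) (Cadd l l').
Proof.
  intros H1 H2 eps He. destruct (H1 (eps/2) ltac:(lra)) as [N1 HN1].
  destruct (H2 (eps/2) ltac:(lra)) as [N2 HN2]. exists (max N1 N2). intros n Hn.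
  replace (Csub (Cadd (u n) (v n)) (Cadd l l')) with (Cadd (Csub (u n) l) (Csub (v n) l')) by (unfold Csub; cx).
  eapply Rle_lt_trans. apply Cabs_triangle. specialize (HN1 n ltac:(lia)). specialize (HN2 n ltac:(lia)). lra.
Qed.

Lemma Ccv_scal a u l : Ccv u l -> Ccv (fun n => Cmul a (u n)) (Cmul a l).
Proof.
  intros H eps He. destruct (H (eps / (Cabs a + 1))) as [N HN].
  { apply Rdiv_lt_0_compat; auto. pose proof (Cabs_nonneg a); lra. }
  exists N. intros n Hn. specialize (HN n Hn).
  replace (Csub (Cmul a (u n)) (Cmul a l)) with (Cmul a (Csub (u n) l)) by (unfold Csub; cx).
  rewrite Cabs_mul. pose proof (Cabs_nonneg a). pose proof (Cabs_nonneg (Csub (u n) l)).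
  apply Rle_lt_trans with (Cabs a * (eps / (Cabs a + 1))).
  apply Rmult_le_compat_l; lra.
  unfold Rdiv. apply Rmult_lt_reg_r with (Cabs a + 1). lra.
  replace (Cabs a * (eps * / (Cabs a + 1)) * (Cabs a + 1)) with (Cabs a * eps) by (field; lra). nra.
Qed.

Lemma Ccv_ext u v l : (forall n, u n = v n) -> Ccv u l -> Ccv v l.
Proof. intros E H eps He. destruct (H eps He) as [N HN]. exists N. intros; rewrite <- E; auto. Qed.

Lemma Ccv_shift u l : Ccv u l -> Ccv (fun n => u (S n)) l.
Proof. intros H eps He. destruct (H eps He) as [N HN]. exists N. intros; apply HN; lia. Qed.

Section DualLimit.
Variable X : CBanach.
Hypothesis Xnt : exists x : X, 0 < vnorm x.
Variable w : nat -> X -> Cx.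
Hypothesis Hw : forall n, is_dual X (w n).
Variables C r : R.
Hypothesis Hr : 0 <= r < 1.
Hypothesis HC : 0 <= C.
Hypothesis Hstep : forall n, dual_bound X (fun b => Csub (w (S n) b) (w n b)) (C * r ^ n).

Lemma dl_tel b n m : (n <= m)%nat -> Cabs (Csub (w n b) (w m b)) <= C * vnorm b * (r ^ n - r ^ m) / (1 - r).
Proof.
  intro Hnm. apply (geo_tel (fun z z' => Cabs (Csub z z')) Csub_tri) with (u := fun n => w n b); auto.
  intros; rewrite Csub_self; lra.
  intros k. rewrite Csub_sym. eapply Rle_trans. apply Hstep. right; ring.
Qed.

Lemma dl_cauchy b : exists l, Ccv (fun n => w n b) l.
Proof.
  apply Ccv_exists. intros eps He.
  destruct (pow_small r (eps * (1 - r) / (C * vnorm b + 1))) as [N HN]; auto.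
  { apply Rdiv_lt_0_compat. apply Rmult_lt_0_compat; lra. pose proof (vnorm_nonneg _ b). nra. }
  exists N. intros n m Hn Hm.
  assert (forall n m, (N <= n)%nat -> (n <= m)%nat -> Cabs (Csub (w n b) (w m b)) < eps).
  { intros n' m' Hn' Hm'. eapply Rle_lt_trans. apply dl_tel; auto.
    specialize (HN n' Hn'). pose proof (vnorm_nonneg _ b).
    pose proof (pow_le1 r m' ltac:(lra)). pose proof (pow_le1 r n' ltac:(lra)).
    assert (C * vnorm b * (r ^ n' - r ^ m') <= (C * vnorm b + 1) * r ^ n').
    { assert (0 <= C * vnorm b) by nra. nra. }
    apply Rle_lt_trans with ((C * vnorm b + 1) * r ^ n' / (1 - r)).
    unfold Rdiv. apply Rmult_le_compat_r; auto. left; apply Rinv_0_lt_compat; lra.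
    apply Rmult_lt_reg_r with (1 - r). lra. unfold Rdiv.
    replace ((C * vnorm b + 1) * r ^ n' * / (1 - r) * (1 - r)) with ((C * vnorm b + 1) * r ^ n') by (field; lra).
    apply Rmult_lt_reg_r with (/ (C * vnorm b + 1)). apply Rinv_0_lt_compat; nra.
    unfold Rdiv in HN. replace ((C * vnorm b + 1) * r ^ n' * / (C * vnorm b + 1)) with (r ^ n') by (field; nra).
    nra. }
  destruct (Nat.le_gt_cases n m). apply H; auto. rewrite Csub_sym. apply H; lia.
Qed.

Definition dlim (b : X) : Cx := proj1_sig (constructive_indefinite_description _ (dl_cauchy b)).

Lemma dlim_cv b : Ccv (fun n => w n b) (dlim b).
Proof. unfold dlim. apply (proj2_sig (constructive_indefinite_description _ (dl_cauchy b))). Qed.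

Lemma dlim_tail n : dual_bound X (fun b => Csub (dlim b) (w n b)) (C * r ^ n / (1 - r)).
Proof.
  intro b. apply (Ccv_le (fun m => w m b) _ _ _ n). apply dlim_cv.
  intros m Hm. rewrite Csub_sym. eapply Rle_trans. apply dl_tel; auto.
  pose proof (vnorm_nonneg _ b). pose proof (pow_le1 r m ltac:(lra)). pose proof (pow_le1 r n ltac:(lra)).
  pose proof (pow_le r m ltac:(lra)).
  unfold Rdiv. replace (C * r ^ n * / (1 - r) * vnorm b) with (C * vnorm b * r ^ n * / (1 - r)) by ring.
  apply Rmult_le_compat_r. left; apply Rinv_0_lt_compat; lra.
  assert (0 <= C * vnorm b) by nra. nra.
Qed.

Lemma dlim_dual : is_dual X dlim.
Proof.
  split; [|split].
  - intros x y. apply (Ccv_unique (fun n => w n (vadd x y))). apply dlim_cv.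
    apply Ccv_ext with (fun n => Cadd (w n x) (w n y)).
    intro n. destruct (Hw n) as [Ha _]. auto.
    apply Ccv_add; apply dlim_cv.
  - intros a x. apply (Ccv_unique (fun n => w n (vscal a x))). apply dlim_cv.
    apply Ccv_ext with (fun n => Cmul a (w n x)).
    intro n. destruct (Hw n) as [_ [Hs _]]. auto.
    apply Ccv_scal; apply dlim_cv.
  - destruct (dual_bound_exists _ _ (Hw 0%nat)) as [c0 [Hc0 B0]].
    exists (c0 + C / (1 - r)). intro b.
    pose proof (dlim_tail 0 b). simpl in H. rewrite Rmult_1_r in H.
    replace (dlim b) with (Cadd (Csub (dlim b) (w 0%nat b)) (w 0%nat b)) by (unfold Csub; cx).
    eapply Rle_trans. apply Cabs_triangle. pose proof (B0 b). lra.
Qed.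
End DualLimit.

Lemma Rdiv_le_0_compat a b : 0 <= a -> 0 < b -> 0 <= a / b.
Proof. intros; unfold Rdiv; apply Rmult_le_pos; auto. left; apply Rinv_0_lt_compat; auto. Qed.

Section Main.
Variable A : BanachAlgebra.
Variable B : BanachLeftModule A.

Notation dact := (dual_act A B).

Lemma dact_eq z f b : dact z f b = z (act f b).
Proof. reflexivity. Qed.

Lemma dact_is_dual z f : is_dual B z -> is_dual B (dact z f).
Proof.
  intros Hz. pose proof Hz as [Ha [Hs _]]. destruct (dual_bound_exists _ z Hz) as [M [HM Hb]].
  split; [|split].
  - intros x y. rewrite !dact_eq, act_addr; auto.
  - intros a x. rewrite !dact_eq, act_scalr; auto.
  - exists (M * vnorm f). intro x. rewrite dact_eq. eapply Rle_trans. apply Hb.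
    rewrite Rmult_assoc. apply Rmult_le_compat_l; auto. apply act_norm.
Qed.

Lemma dact_bound z f c : dual_bound B z c -> 0 <= c -> dual_bound B (dact z f) (c * vnorm f).
Proof.
  intros Hb Hc x. rewrite dact_eq. eapply Rle_trans. apply Hb.
  rewrite Rmult_assoc. apply Rmult_le_compat_l; auto. apply act_norm.
Qed.

Lemma hA_is_dual (w : B -> Cx) (y : B) : is_dual B w -> is_dual A (fun x => w (act x y)).
Proof.
  intros Hz. pose proof Hz as [Ha [Hs _]]. destruct (dual_bound_exists _ w Hz) as [M [HM Hb]].
  split; [|split].
  - intros x x'. simpl. rewrite act_addl; auto.
  - intros a x. simpl. rewrite act_scall; auto.
  - exists (M * vnorm y). intro x. eapply Rle_trans. apply Hb.
    replace (M * vnorm y * vnorm x) with (M * (vnorm x * vnorm y)) by ring.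
    apply Rmult_le_compat_l; auto. apply act_norm.
Qed.

Lemma dact_add z x x' : is_dual B z -> dact z (vadd x x') = fadd (dact z x) (dact z x').
Proof.
  intros [Ha _]. apply functional_extensionality; intro b. unfold fadd. rewrite !dact_eq, act_addl; auto.
Qed.

Lemma dact_scal z a x : is_dual B z -> dact z (vscal a x) = fcs a (dact z x).
Proof.
  intros [_ [Hs _]]. apply functional_extensionality; intro b. unfold fcs. rewrite !dact_eq, act_scall; auto.
Qed.

Lemma dact_comb z t f g : is_dual B z ->
  dact z (vadd (vscal (mkC t 0) f) (vscal (mkC (1-t) 0) g)) =
  fadd (fsc t (dact z f)) (fsc (1-t) (dact z g)).
Proof.
  intros Hz. rewrite dact_add, !dact_scal, !fsc_fcs by auto. reflexivity.
Qed.

Variable I : Type.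
Variable le : I -> I -> Prop.
Variable e : I -> A.
Variable i00 : I.
Hypothesis le_refl : forall i, le i i.
Hypothesis le_trans : forall i j k, le i j -> le j k -> le i k.
Hypothesis le_dir : forall i j, exists k, le i k /\ le j k.
Variable K : R.
Hypothesis Kpos : 0 < K.
Hypothesis eK : forall i, vnorm (e i) <= K.
Hypothesis eA : forall (a : A) eps, 0 < eps -> exists i0, forall i, le i0 i ->
        vnorm (vadd (amul (e i) a) (vopp a)) < eps.
Hypothesis eB : forall (b : B) eps, 0 < eps -> exists i0, forall i, le i0 i ->
        vnorm (vadd (act (e i) b) (vopp b)) < eps.
Hypothesis wap : forall z, is_dual B z -> in_wap_l A B z.
Hypothesis Bnt : exists b : B, 0 < vnorm b.

Lemma Ant : exists a : A, 0 < vnorm a.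
Proof.
  destruct Bnt as [b Hb]. destruct (eB b (vnorm b / 2)) as [i0 Hi0]. lra.
  specialize (Hi0 i0 (le_refl i0)). exists (e i0).
  pose proof (vnorm_sub_tri _ b (act (e i0) b) vzero) as H.
  rewrite vnorm_sub_sym in Hi0. rewrite vopp_0, !vadd_0 in H.
  pose proof (act_norm _ B (e i0) b).
  destruct (Rle_or_lt (vnorm (e i0)) 0) as [H1|H1]; auto.
  pose proof (vnorm_nonneg _ (e i0)). assert (vnorm (e i0) = 0) by lra. rewrite H3 in H0. lra.
Qed.

Inductive Conv (i1 : I) : A -> Prop :=
| cv_e : forall i, le i1 i -> Conv i1 (e i)
| cv_comb : forall t f g, 0 <= t <= 1 -> Conv i1 f -> Conv i1 g ->
    Conv i1 (vadd (vscal (mkC t 0) f) (vscal (mkC (1-t) 0) g)).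

Lemma Conv_norm i1 f : Conv i1 f -> vnorm f <= K.
Proof.
  induction 1. apply eK.
  eapply Rle_trans. apply vnorm_convex; auto. nra.
Qed.

Lemma Conv_approx i1 (y : A) d : (forall i, le i1 i -> vnorm (vadd (amul (e i) y) (vopp y)) <= d) ->
  forall f, Conv i1 f -> vnorm (vadd (amul f y) (vopp y)) <= d.
Proof.
  intros H f Hf. induction Hf. auto.
  rewrite amul_addl, !amul_scall, comb_sub.
  eapply Rle_trans. apply vnorm_convex; auto. nra.
Qed.

Lemma Conv_approxB i1 (y : B) d : (forall i, le i1 i -> vnorm (vadd (act (e i) y) (vopp y)) <= d) ->
  forall f, Conv i1 f -> vnorm (vadd (act f y) (vopp y)) <= d.
Proof.
  intros H f Hf. induction Hf. auto.
  rewrite act_addl, !act_scall, comb_sub.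
  eapply Rle_trans. apply vnorm_convex; auto. nra.
Qed.

Definition EA (h : A -> Cx) (t : R) := exists i0, forall i, le i0 i -> Re (h (e i)) <= t.
Definition pA (h : A -> Cx) := Rinf (EA h).

Lemma EA_ne h c : dual_bound A h c -> EA h (c * K).
Proof.
  intros Hb. pose proof (dual_bound_nonneg _ h c Ant Hb).
  exists i00. intros i _. eapply Rle_trans. apply Rle_trans with (1 := RRle_abs _). apply Cabs_Re.
  eapply Rle_trans. apply Hb. apply Rmult_le_compat_l; auto.
Qed.

Lemma EA_lb h c : dual_bound A h c -> forall t, EA h t -> - (c * K) <= t.
Proof.
  intros Hb t [i0 H]. pose proof (dual_bound_nonneg _ h c Ant Hb).
  specialize (H i0 (le_refl i0)).
  pose proof (Cabs_Re (h (e i0))). pose proof (Hb (e i0)). pose proof (eK i0).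
  assert (c * vnorm (e i0) <= c * K) by (apply Rmult_le_compat_l; auto).
  pose proof (Rle_abs (- Re (h (e i0)))). rewrite Rabs_Ropp in H5. lra.
Qed.

Lemma ex_bound (X : CBanach) (h : X -> Cx) : is_dual X h -> exists c, dual_bound X h c.
Proof. intro H. destruct (dual_bound_exists _ h H) as [c [_ Hc]]. eauto. Qed.

Lemma pA_sub h1 h2 : is_dual A h1 -> is_dual A h2 -> pA (fadd h1 h2) <= pA h1 + pA h2.
Proof.
  intros H1 H2. destruct (ex_bound _ _ H1) as [c1 B1]. destruct (ex_bound _ _ H2) as [c2 B2].
  destruct (ex_bound _ _ (is_dual_fadd _ _ _ H1 H2)) as [c3 B3].
  apply Rinf_sub. eexists; apply (EA_ne _ _ B1). eexists; apply (EA_ne _ _ B2).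
  intros r1 r2 [i1 E1] [i2 E2]. unfold pA. apply Rinf_lb with (m := -(c3*K)).
  - destruct (le_dir i1 i2) as [k [Hk1 Hk2]]. exists k. intros i Hi.
    unfold fadd; simpl. pose proof (E1 i (le_trans _ _ _ Hk1 Hi)). pose proof (E2 i (le_trans _ _ _ Hk2 Hi)). lra.
  - apply EA_lb; auto.
Qed.

Lemma pA_sc t h : 0 < t -> is_dual A h -> pA (fsc t h) = t * pA h.
Proof.
  intros Ht Hh. destruct (ex_bound _ _ Hh) as [c Bc]. unfold pA. apply Rinf_scale; auto.
  - eexists; apply (EA_ne _ _ Bc).
  - exists (-(c*K)). apply EA_lb; auto.
  - intros r; split.
    + intros [i0 H]. exists (r / t). split.
      * exists i0. intros i Hi. specialize (H i Hi). unfold fsc in H; simpl in H.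
        apply (Rmult_le_reg_l t); auto. unfold Rdiv. replace (t * (r * / t)) with r by (field; lra). auto.
      * field; lra.
    + intros [r' [[i0 H] ->]]. exists i0. intros i Hi. unfold fsc; simpl.
      apply Rmult_le_compat_l; auto. lra.
Qed.

Lemma pA_bound h c : is_dual A h -> dual_bound A h c -> pA h <= c * K.
Proof.
  intros Hh Hb. unfold pA. apply Rinf_lb with (m := -(c*K)). apply EA_ne; auto. apply EA_lb; auto.
Qed.

Lemma pA_hA_eps (w : B -> Cx) (y : B) eps : is_dual B w -> 0 < eps ->
  pA (fun x => w (act x y)) <= Re (w y) + eps.
Proof.
  intros Hw He. destruct (ex_bound _ _ (hA_is_dual w y Hw)) as [c Bc].
  destruct (dual_bound_exists _ w Hw) as [M [HM Hb]].
  destruct (eB y (eps / (M + 1))) as [i0 Hi0].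
  { apply Rdiv_lt_0_compat; lra. }
  unfold pA. apply Rinf_lb with (m := -(c*K)); [| apply EA_lb; auto].
  exists i0. intros i Hi. specialize (Hi0 i Hi).
  pose proof (Hb (vadd (act (e i) y) (vopp y))) as H.
  rewrite (dual_sub _ w _ _ Hw) in H.
  pose proof (Cabs_Re (mkC (Re (w (act (e i) y)) - Re (w y)) (Im (w (act (e i) y)) - Im (w y)))) as H0.
  simpl in H0. pose proof (RRle_abs (Re (w (act (e i) y)) - Re (w y))).
  assert (M * vnorm (vadd (act (e i) y) (vopp y)) <= M * (eps / (M+1))).
  { apply Rmult_le_compat_l; lra. }
  assert (M * (eps / (M+1)) <= eps).
  { unfold Rdiv. apply Rmult_le_reg_r with (M+1). lra.
    replace (M * (eps * / (M + 1)) * (M + 1)) with (M * eps) by (field; lra). nra. }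
  lra.
Qed.

Lemma pA_hA (w : B -> Cx) (y : B) : is_dual B w -> pA (fun x => w (act x y)) <= Re (w y).
Proof.
  intros Hw. apply Rnot_lt_le. intro Hlt.
  pose proof (pA_hA_eps w y ((pA (fun x => w (act x y)) - Re (w y)) / 2) Hw ltac:(lra)). lra.
Qed.

Lemma psi_exists : exists psi : (A -> Cx) -> R,
  (forall u v, is_dual A u -> is_dual A v -> psi (fadd u v) = psi u + psi v) /\ (forall t u, is_dual A u -> psi (fsc t u) = t * psi u) /\ (forall u, is_dual A u -> psi u <= pA u).
Proof.
  apply hahn_banach.
  - apply is_dual_fzero.
  - apply is_dual_fadd.
  - apply is_dual_fsc.
  - apply pA_sub.
  - apply pA_sc.
Qed.

Section Mazur.
Variable z : B -> Cx.
Hypothesis Hz : is_dual B z.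
Variable i1 : I.
Variable d : R.
Hypothesis Hd : 0 < d.

Definition Kset k := exists f, Conv i1 f /\ k = fadd z (fsc (-1) (dact z f)).
Definition EB u r := exists c s k, 0 <= s /\ Kset k /\ dual_bound B (fadd u (fsc s k)) c /\ r = c - s * d.
Definition pB u := Rinf (EB u).

Hypothesis Hc : forall f, Conv i1 f -> ~ dual_bound B (fadd z (fsc (-1) (dact z f))) d.

Lemma Kset_dual k : Kset k -> is_dual B k.
Proof.
  intros [f [_ ->]]. apply is_dual_fadd; auto. apply is_dual_fsc. apply dact_is_dual; auto.
Qed.

Lemma Kset_ne : Kset (fadd z (fsc (-1) (dact z (e i1)))).
Proof. exists (e i1). split; auto. constructor; auto. Qed.

Lemma EB_ne u c : dual_bound B u c -> EB u c.
Proof.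
  intros Hb. exists c, 0, (fadd z (fsc (-1) (dact z (e i1)))). split. lra. split. apply Kset_ne. split; [|ring].
  replace (fadd u (fsc 0 (fadd z (fsc (-1) (dact z (e i1)))))) with u by (fx; ring). auto.
Qed.

Lemma EB_lb u cu : dual_bound B u cu -> forall r, EB u r -> - cu <= r.
Proof.
  intros Hu r [c [s [k [Hs [Hk [Hb ->]]]]]].
  pose proof (dual_bound_nonneg _ u cu Bnt Hu) as Hcu.
  destruct Hk as [f [Hf Hk]]. pose proof (Hc f Hf) as Hn. rewrite <- Hk in Hn.
  unfold dual_bound in Hn. apply not_all_ex_not in Hn. destruct Hn as [b Hn]. apply Rnot_le_lt in Hn.
  assert (Hkd : is_dual B k) by (apply Kset_dual; exists f; auto).
  destruct (dual_bound_exists _ k Hkd) as [Mk [HMk Hbk]].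
  assert (Hbpos : 0 < vnorm b).
  { destruct (Rle_or_lt (vnorm b) 0) as [H|H]; auto. pose proof (vnorm_nonneg _ b).
    assert (vnorm b = 0) by lra. specialize (Hbk b). rewrite H1 in *. lra. }
  pose proof (Hb b) as H1. pose proof (Hu b) as H2. unfold fadd in H1.
  pose proof (Cabs_sub_le (u b) (fsc s k b)) as H3.
  assert (Cabs (fsc s k b) = s * Cabs (k b)) as H4.
  { replace (fsc s k b) with (Cmul (mkC s 0) (k b)) by (unfold fsc; cx).
    rewrite Cabs_mul, Cabs_real, Rabs_pos_eq by auto. auto. }
  rewrite H4 in H3.
  assert (s * (d * vnorm b) <= s * Cabs (k b)) by (apply Rmult_le_compat_l; lra).
  assert (s * d * vnorm b <= (c + cu) * vnorm b).
  { replace (s*d*vnorm b) with (s*(d*vnorm b)) by ring.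
    replace ((c+cu)*vnorm b) with (c*vnorm b + cu*vnorm b) by ring. lra. }
  assert (s * d <= c + cu) by (apply Rmult_le_reg_r with (vnorm b); auto).
  lra.
Qed.

Lemma Kset_comb k1 k2 s1 s2 : Kset k1 -> Kset k2 -> 0 <= s1 -> 0 <= s2 -> 0 < s1 + s2 ->
  Kset (fadd (fsc (s1 / (s1 + s2)) k1) (fsc (s2 / (s1 + s2)) k2)).
Proof.
  intros [f1 [H1 ->]] [f2 [H2 ->]] Hs1 Hs2 Hs.
  set (t := s1 / (s1 + s2)).
  assert (0 <= t <= 1). { unfold t; split. apply Rdiv_le_0_compat; lra.
    apply (Rmult_le_reg_r (s1+s2)); auto. unfold Rdiv. field_simplify; lra. }
  exists (vadd (vscal (mkC t 0) f1) (vscal (mkC (1-t) 0) f2)). split.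
  constructor; auto.
  rewrite dact_comb by auto.
  replace (s2 / (s1 + s2)) with (1 - t) by (unfold t; field; lra).
  fx; ring.
Qed.

Lemma pB_sub u v : is_dual B u -> is_dual B v -> pB (fadd u v) <= pB u + pB v.
Proof.
  intros Hu Hv. destruct (ex_bound _ _ Hu) as [cu Bu]. destruct (ex_bound _ _ Hv) as [cv Bv].
  destruct (ex_bound _ _ (is_dual_fadd _ _ _ Hu Hv)) as [cw Bw].
  apply Rinf_sub. eexists; apply (EB_ne _ _ Bu). eexists; apply (EB_ne _ _ Bv).
  intros r1 r2 [c1 [s1 [k1 [Hs1 [Hk1 [Hb1 ->]]]]]] [c2 [s2 [k2 [Hs2 [Hk2 [Hb2 ->]]]]]].
  unfold pB. apply Rinf_lb with (m := - cw); [| apply EB_lb; auto].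
  pose proof (dual_bound_add _ _ _ _ _ Hb1 Hb2) as Hb.
  destruct (Req_dec (s1 + s2) 0) as [H0|H0].
  - assert (s1 = 0) by lra. assert (s2 = 0) by lra. subst.
    exists (c1 + c2), 0, k1. split. lra. split; auto. split; [|ring].
    replace (fadd (fadd u v) (fsc 0 k1)) with (fadd (fadd u (fsc 0 k1)) (fadd v (fsc 0 k2)))
      by (fx; ring). auto.
  - exists (c1 + c2), (s1 + s2), (fadd (fsc (s1 / (s1 + s2)) k1) (fsc (s2 / (s1 + s2)) k2)).
    split. lra. split. apply Kset_comb; auto; lra. split; [|ring].
    replace (fadd (fadd u v) (fsc (s1 + s2) (fadd (fsc (s1 / (s1 + s2)) k1) (fsc (s2 / (s1 + s2)) k2))))
      with (fadd (fadd u (fsc s1 k1)) (fadd v (fsc s2 k2))). auto.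
    fx; field; auto.
Qed.

Lemma pB_sc t u : 0 < t -> is_dual B u -> pB (fsc t u) = t * pB u.
Proof.
  intros Ht Hu. destruct (ex_bound _ _ Hu) as [c Bc]. unfold pB. apply Rinf_scale; auto.
  - eexists; apply (EB_ne _ _ Bc).
  - exists (-c). apply EB_lb; auto.
  - intros r; split.
    + intros [c' [s [k [Hs [Hk [Hb ->]]]]]]. exists (c'/t - (s/t) * d). split; [|field; lra].
      exists (c'/t), (s/t), k. split. apply Rdiv_le_0_compat; lra. split; auto. split; auto.
      replace (fadd u (fsc (s / t) k)) with (fsc (/ t) (fadd (fsc t u) (fsc s k))) by (fx; field; lra).
      replace (c' / t) with (Rabs (/ t) * c'). apply dual_bound_fsc; auto.
      rewrite Rabs_pos_eq. unfold Rdiv; ring. left; apply Rinv_0_lt_compat; auto.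
    + intros [r' [[c' [s [k [Hs [Hk [Hb ->]]]]]] ->]].
      exists (t * c'), (t * s), k. split. nra. split; auto. split; [|ring].
      replace (fadd (fsc t u) (fsc (t * s) k)) with (fsc t (fadd u (fsc s k))) by (fx; ring).
      replace (t * c') with (Rabs t * c'). apply dual_bound_fsc; auto. rewrite Rabs_pos_eq; lra.
Qed.

Lemma pB_bound u c : is_dual B u -> dual_bound B u c -> pB u <= c.
Proof.
  intros Hu Hb. unfold pB. apply Rinf_lb with (m := - c). apply EB_ne; auto. apply EB_lb; auto.
Qed.

Lemma pB_negk k : Kset k -> pB (fsc (-1) k) <= - d.
Proof.
  intros Hk. assert (Hkd := Kset_dual k Hk).
  destruct (ex_bound _ _ (is_dual_fsc _ (-1) _ Hkd)) as [c Bc].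
  unfold pB. apply Rinf_lb with (m := - c); [| apply EB_lb; auto].
  exists 0, 1, k. split. lra. split; auto. split; [|ring].
  replace (fadd (fsc (-1) k) (fsc 1 k)) with (@fzero B) by (fx; ring). apply dual_bound_zero.
Qed.

End Mazur.

Lemma essential z i1 d : is_dual B z -> 0 < d ->
  exists f, Conv i1 f /\ dual_bound B (fadd z (fsc (-1) (dact z f))) d.
Proof.
  intros Hz Hd. apply NNPP; intro Hn.
  assert (Hc : forall f, Conv i1 f -> ~ dual_bound B (fadd z (fsc (-1) (dact z f))) d).
  { intros f Hf Hb. apply Hn. exists f; auto. }
  destruct (hahn_banach B (is_dual B) (pB z i1 d) (is_dual_fzero B) (is_dual_fadd B) (is_dual_fsc B)
     (pB_sub z Hz i1 d Hc) (pB_sc z Hz i1 d Hc)) as [phi [phi_add [phi_sc phi_le]]].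
  assert (phi_abs : forall u c, is_dual B u -> dual_bound B u c -> Rabs (phi u) <= c).
  { intros u c Hu Hb. apply Rabs_le. split.
    - pose proof (phi_le (fsc (-1) u) (is_dual_fsc _ _ _ Hu)).
      rewrite phi_sc in H by auto.
      pose proof (pB_bound z Hz i1 d Hc (fsc (-1) u) (Rabs (-1) * c) (is_dual_fsc _ _ _ Hu)
        (dual_bound_fsc _ _ _ _ Hb)). rewrite Rabs_left in H0 by lra. lra.
    - pose proof (phi_le u Hu). pose proof (pB_bound z Hz i1 d Hc u c Hu Hb). lra. }
  assert (phi_k : forall k, Kset z i1 k -> d <= phi k).
  { intros k Hk. assert (Hkd := Kset_dual z Hz i1 k Hk).
    pose proof (phi_le (fsc (-1) k) (is_dual_fsc _ _ _ Hkd)). rewrite phi_sc in H by auto.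
    pose proof (pB_negk z Hz i1 d Hc k Hk). lra. }
  set (F := cplx phi).
  assert (F_add : forall f g, is_dual B f -> is_dual B g -> F (fadd f g) = Cadd (F f) (F g)).
  { intros; apply (cplx_add _ (is_dual B) phi (is_dual_fi B) phi_add); auto. }
  assert (F_scal : forall a f, is_dual B f -> F (fcs a f) = Cmul a (F f)).
  { intros; apply (cplx_scal _ (is_dual B) phi (is_dual_fsc B) (is_dual_fi B) phi_add phi_sc); auto. }
  assert (F_bound : forall f c, is_dual B f -> dual_bound B f c -> Cabs (F f) <= 2 * c).
  { intros f c Hf Hb. apply cplx_bound. apply phi_abs; auto. apply phi_abs. apply is_dual_fi; auto.
    apply dual_bound_fi; auto. }
  assert (HF : is_bidual B F).
  { split; [|split]. exact F_add. exact F_scal. exists 2. exact F_bound. }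
  destruct psi_exists as [psi [psi_add [psi_sc psi_le]]].
  assert (psi_abs : forall h c, is_dual A h -> dual_bound A h c -> Rabs (psi h) <= c * K).
  { intros h c Hh Hb. apply Rabs_le. split.
    - pose proof (psi_le (fsc (-1) h) (is_dual_fsc _ _ _ Hh)).
      rewrite psi_sc in H by auto.
      pose proof (pA_bound (fsc (-1) h) (Rabs (-1) * c) (is_dual_fsc _ _ _ Hh)
        (dual_bound_fsc _ _ _ _ Hb)). rewrite Rabs_left in H0 by lra. lra.
    - pose proof (psi_le h Hh). pose proof (pA_bound h c Hh Hb). lra. }
  set (G := cplx psi).
  assert (G_bound : forall f c, is_dual A f -> dual_bound A f c -> Cabs (G f) <= (2 * K) * c).
  { intros f c Hf Hb. replace (2 * K * c) with (2 * (c * K)) by ring. apply cplx_bound.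
    apply psi_abs; auto. apply psi_abs. apply is_dual_fi; auto. apply dual_bound_fi; auto. }
  assert (HG : is_bidual A G).
  { split; [|split].
    - intros; apply (cplx_add _ (is_dual A) psi (is_dual_fi A) psi_add); auto.
    - intros; apply (cplx_scal _ (is_dual A) psi (is_dual_fsc A) (is_dual_fi A) psi_add psi_sc); auto.
    - exists (2 * K). exact G_bound. }
  assert (psi_h : forall w y, is_dual B w -> psi (fun x => w (act x y)) = Re (w y)).
  { intros w y Hw. apply Rle_antisym.
    - eapply Rle_trans. apply psi_le. apply hA_is_dual; auto. apply pA_hA; auto.
    - pose proof (psi_le (fsc (-1) (fun x => w (act x y))) (is_dual_fsc _ _ _ (hA_is_dual w y Hw))).
      rewrite psi_sc in H by (apply hA_is_dual; auto).
      pose proof (pA_hA (fsc (-1) w) y (is_dual_fsc _ _ _ Hw)). unfold fsc in H0 at 2. simpl in H0.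
      change (fsc (-1) (fun x => w (act x y))) with (fun x => fsc (-1) w (act x y)) in H. lra. }
  assert (G_h : forall y, G (fun x => z (act x y)) = z y).
  { intro y. unfold G, cplx. apply Cx_ext; simpl.
    - apply psi_h; auto.
    - change (fi (fun x => z (act x y))) with (fun x => fi z (act x y)).
      rewrite psi_h by (apply is_dual_fi; auto). unfold fi, Cmul; simpl. ring. }
  destruct (wap z Hz) as [_ W]. specialize (W G F HG HF).
  unfold adj3t, adj3, adj2, adj1, flip in W.
  assert (E : (fun y => G (fun x => z (act x y))) = z).
  { apply functional_extensionality; intro y. apply G_h. }
  rewrite E in W.
  set (g := fun x : A => F (fun y => z (act x y))) in W.
  assert (Hg : is_dual A g).
  { destruct (dual_bound_exists _ z Hz) as [cz [Hcz Bz]].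
    split; [|split].
    - intros x x'. unfold g. change (fun y => z (act (vadd x x') y)) with (dact z (vadd x x')).
      rewrite dact_add by auto. apply F_add; apply dact_is_dual; auto.
    - intros a x. unfold g. change (fun y => z (act (vscal a x) y)) with (dact z (vscal a x)).
      rewrite dact_scal by auto. apply F_scal; apply dact_is_dual; auto.
    - exists (2 * cz). intro x. unfold g. change (fun y => z (act x y)) with (dact z x).
      rewrite Rmult_assoc. apply F_bound. apply dact_is_dual; auto. apply dact_bound; auto. }
  assert (Hpsi : psi g <= phi z - d).
  { eapply Rle_trans. apply psi_le; auto.
    destruct (ex_bound _ _ Hg) as [cg Bg].
    unfold pA. apply Rinf_lb with (m := -(cg * K)); [| apply EA_lb; auto].
    exists i1. intros i Hi. unfold g. change (fun y => z (act (e i) y)) with (dact z (e i)).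
    unfold F. rewrite cplx_Re.
    assert (Hk : Kset z i1 (fadd z (fsc (-1) (dact z (e i))))).
    { exists (e i). split; auto. constructor; auto. }
    pose proof (phi_k _ Hk). rewrite phi_add, phi_sc in H; try apply dact_is_dual; auto.
    lra. apply is_dual_fsc, dact_is_dual; auto. }
  assert (Re (G g) = Re (F z)) by (rewrite W; auto).
  unfold G, F in H. rewrite !cplx_Re in H. lra.
Qed.

Definition cc := / (2 * (K + 1)).
Definition rho := cc * K / (1 - cc).
Definition Lam := / ((1 - cc) * (1 - rho)).

Lemma cc_facts : 0 < cc /\ cc < 1/2 /\ 0 <= rho < 1/2 /\ 0 < Lam.
Proof.
  unfold Lam, rho, cc. assert (0 < 2 * (K + 1)) by lra.
  assert (0 < / (2 * (K + 1))) by (apply Rinv_0_lt_compat; auto).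
  assert (/ (2 * (K + 1)) < 1/2).
  { apply Rmult_lt_reg_r with (2 * (K+1)); auto. rewrite Rinv_l by lra. lra. }
  assert (Hr : / (2 * (K + 1)) * K / (1 - / (2 * (K + 1))) = K / (2 * K + 1)).
  { field. lra. }
  rewrite Hr. assert (0 <= K / (2 * K + 1) < 1/2).
  { split. apply Rdiv_le_0_compat; lra. apply Rmult_lt_reg_r with (2*K+1). lra.
    unfold Rdiv. rewrite Rmult_assoc, Rinv_l by lra. lra. }
  repeat split; try lra. apply Rinv_0_lt_compat. apply Rmult_lt_0_compat; lra.
Qed.

Lemma Csub_scal a z w : Csub (Cmul a z) (Cmul a w) = Cmul a (Csub z w).
Proof. unfold Csub; cx. Qed.

Lemma Cabs_scal_real t z : 0 <= t -> Cabs (Cmul (mkC t 0) z) = t * Cabs z.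
Proof. intro. rewrite Cabs_mul, Cabs_real, Rabs_pos_eq; auto. Qed.

Lemma neumann_step v w f cv W : is_dual B w -> vnorm f <= K -> 0 <= W ->
  (forall b, v b = Cadd (Cmul (mkC (1-cc) 0) (w b)) (Cmul (mkC cc 0) (w (act f b)))) ->
  dual_bound B v cv -> dual_bound B w W -> dual_bound B w (cv / (1 - cc) + rho * W).
Proof.
  intros Hw Hf HW E Hv HwW b. destruct cc_facts as [c1 [c2 [c3 c4]]].
  assert (Cmul (mkC (1-cc) 0) (w b) = Cadd (v b) (Cmul (mkC (-cc) 0) (w (act f b)))).
  { rewrite E. cx. }
  assert (Cabs (Cmul (mkC (1-cc) 0) (w b)) <= cv * vnorm b + cc * (W * K * vnorm b)).
  { rewrite H. eapply Rle_trans. apply Cabs_triangle. apply Rplus_le_compat. apply Hv.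
    rewrite Cabs_mul, Cabs_real, Rabs_left by lra. replace (- - cc) with cc by ring.
    apply Rmult_le_compat_l. lra. eapply Rle_trans. apply HwW.
    rewrite Rmult_assoc. apply Rmult_le_compat_l; auto.
    eapply Rle_trans. apply act_norm. apply Rmult_le_compat_r; auto. apply vnorm_nonneg. }
  rewrite Cabs_scal_real in H0 by lra.
  unfold rho. apply Rmult_le_reg_l with (1 - cc). lra.
  replace ((1 - cc) * ((cv / (1 - cc) + cc * K / (1 - cc) * W) * vnorm b)) with
    (cv * vnorm b + cc * (W * K * vnorm b)) by (field; lra). auto.
Qed.

Lemma neumann_bound v w f cv : is_dual B w -> vnorm f <= K ->
  (forall b, v b = Cadd (Cmul (mkC (1-cc) 0) (w b)) (Cmul (mkC cc 0) (w (act f b)))) ->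
  dual_bound B v cv -> dual_bound B w (Lam * cv).
Proof.
  intros Hw Hf E Hv. destruct cc_facts as [c1 [c2 [c3 c4]]].
  destruct (dual_bound_exists _ w Hw) as [W0 [HW0 BW0]].
  assert (Hcv : 0 <= cv) by (apply (dual_bound_nonneg _ v cv Bnt Hv)).
  set (L := Lam * cv). assert (HL : 0 <= L) by (unfold L; nra).
  set (W1 := Rmax W0 L).
  assert (HLW : L <= W1) by apply Rmax_r.
  assert (Hn : forall n, dual_bound B w (L + rho ^ n * (W1 - L))).
  { induction n.
    - simpl. replace (L + 1 * (W1 - L)) with W1 by ring. intro b. eapply Rle_trans. apply BW0.
      apply Rmult_le_compat_r. apply vnorm_nonneg. apply Rmax_l.
    - pose proof (pow_le rho n ltac:(lra)).
      eapply neumann_step in IHn; eauto. 2: { nra. }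
      replace (L + rho ^ S n * (W1 - L)) with (cv / (1 - cc) + rho * (L + rho ^ n * (W1 - L))); auto.
      simpl. unfold L, Lam. field. split; lra. }
  intro b. apply Rnot_lt_le. intro H.
  assert (Hb : 0 < vnorm b).
  { destruct (Rle_or_lt (vnorm b) 0); auto. pose proof (vnorm_nonneg _ b).
    assert (vnorm b = 0) by lra. pose proof (Hn 0%nat b). rewrite H2 in *. lra. }
  set (gap := Cabs (w b) - L * vnorm b).
  destruct (pow_small rho (gap / ((W1 - L + 1) * vnorm b))) as [N HN]. lra.
  { apply Rdiv_lt_0_compat. unfold gap; lra. nra. }
  specialize (HN N (le_n N)). specialize (Hn N b).
  pose proof (pow_le rho N ltac:(lra)).
  assert (rho ^ N * (W1 - L) * vnorm b < gap).
  { apply Rle_lt_trans with (rho ^ N * ((W1 - L + 1) * vnorm b)). 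
    rewrite Rmult_assoc. apply Rmult_le_compat_l; auto. nra.
    apply Rmult_lt_reg_r with (/ ((W1 - L + 1) * vnorm b)). apply Rinv_0_lt_compat; nra.
    rewrite Rmult_assoc, Rinv_r by nra. rewrite Rmult_1_r. auto. }
  unfold gap in H1. lra.
Qed.

Lemma Ccv_const z : Ccv (fun _ => z) z.
Proof. intros eps He. exists 0%nat. intros. rewrite Csub_self. auto. Qed.

Fixpoint witer (v : B -> Cx) (f : A) (n : nat) : B -> Cx :=
  match n with
  | O => fzero
  | S m => fun b => Cmul (mkC (/ (1 - cc)) 0)
             (Cadd (v b) (Cmul (mkC (- cc) 0) (witer v f m (act f b))))
  end.

Lemma witer_S v f m b : witer v f (S m) b = Cmul (mkC (/ (1 - cc)) 0)
             (Cadd (v b) (Cmul (mkC (- cc) 0) (witer v f m (act f b)))).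
Proof. reflexivity. Qed.

Lemma witer_dual v f n : is_dual B v -> is_dual B (witer v f n).
Proof.
  intros Hv. induction n; simpl. apply is_dual_fzero.
  replace (fun b => Cmul (mkC (/ (1 - cc)) 0) (Cadd (v b) (Cmul (mkC (- cc) 0) (witer v f n (act f b)))))
    with (fcs (mkC (/ (1 - cc)) 0) (fadd v (fcs (mkC (- cc) 0) (dact (witer v f n) f)))) by reflexivity.
  apply is_dual_fcs, is_dual_fadd; auto. apply is_dual_fcs, dact_is_dual; auto.
Qed.

Lemma neumann v f : is_dual B v -> vnorm f <= K -> exists w, is_dual B w /\
  (forall b, v b = Cadd (Cmul (mkC (1-cc) 0) (w b)) (Cmul (mkC cc 0) (w (act f b)))).
Proof.
  intros Hv Hf. destruct cc_facts as [c1 [c2 [c3 c4]]].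
  destruct (dual_bound_exists _ v Hv) as [cv [Hcv Bv]].
  set (wn := witer v f).
  assert (Hstep : forall n, dual_bound B (fun b => Csub (wn (S n) b) (wn n b)) (cv / (1 - cc) * rho ^ n)).
  { induction n.
    - intro b. unfold wn; simpl. unfold fzero. replace (Csub (Cmul (mkC (/ (1 - cc)) 0) (Cadd (v b) (Cmul (mkC (- cc) 0) C0))) C0)
        with (Cmul (mkC (/ (1 - cc)) 0) (v b)) by (unfold Csub, C0; cx).
      rewrite Cabs_scal_real. 2: { left; apply Rinv_0_lt_compat; lra. }
      replace (cv / (1 - cc) * 1 * vnorm b) with (/ (1 - cc) * (cv * vnorm b)) by (field; lra).
      apply Rmult_le_compat_l. left; apply Rinv_0_lt_compat; lra. apply Bv.
    - intro b. unfold wn. rewrite (witer_S v f (S n) b), (witer_S v f n b).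
      replace (Csub (Cmul (mkC (/ (1 - cc)) 0) (Cadd (v b) (Cmul (mkC (- cc) 0) (witer v f (S n) (act f b)))))
                    (Cmul (mkC (/ (1 - cc)) 0) (Cadd (v b) (Cmul (mkC (- cc) 0) (witer v f n (act f b))))))
        with (Cmul (mkC (- cc / (1 - cc)) 0) (Csub (witer v f (S n) (act f b)) (witer v f n (act f b))))
        by (unfold Csub; apply Cx_ext; cbn [Re Im Cmul Cadd]; field; lra).
      assert (Hq : 0 < cc / (1 - cc)) by (apply Rdiv_lt_0_compat; lra).
      replace (- cc / (1 - cc)) with (- (cc / (1 - cc))) by (field; lra).
      rewrite Cabs_mul, Cabs_real, Rabs_left, Ropp_involutive by lra.
      eapply Rle_trans. apply Rmult_le_compat_l. lra. apply IHn.
      assert (vnorm (act f b) <= K * vnorm b).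
      { eapply Rle_trans. apply act_norm. apply Rmult_le_compat_r; auto. apply vnorm_nonneg. }
      pose proof (pow_le rho n ltac:(lra)).
      assert (0 <= cv / (1 - cc)) by (apply Rdiv_le_0_compat; lra).
      replace (cv / (1 - cc) * rho ^ S n * vnorm b) with
        (cc / (1 - cc) * (cv / (1 - cc) * rho ^ n * (K * vnorm b))) by (simpl; unfold rho; field; lra).
      apply Rmult_le_compat_l. lra. apply Rmult_le_compat_l; auto. nra. }
  assert (Hwd : forall n, is_dual B (wn n)) by (intro; apply witer_dual; auto).
  assert (hr1 : 0 <= rho < 1) by lra.
  assert (hC : 0 <= cv / (1 - cc)) by (apply Rdiv_le_0_compat; lra).
  exists (dlim B wn (cv / (1 - cc)) rho hr1 hC Hstep). split.
  - apply dlim_dual; auto.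
  - intro b. set (w := dlim B wn (cv / (1 - cc)) rho hr1 hC Hstep).
    assert (H1 : Ccv (fun n => wn (S n) b) (w b)) by (apply (Ccv_shift (fun n => wn n b)), dlim_cv).
    assert (H2 : Ccv (fun n => wn (S n) b) (Cmul (mkC (/ (1 - cc)) 0) (Cadd (v b) (Cmul (mkC (- cc) 0) (w (act f b)))))).
    { apply (Ccv_ext (fun n => Cmul (mkC (/ (1 - cc)) 0) (Cadd (v b) (Cmul (mkC (- cc) 0) (wn n (act f b)))))).
      intro n; reflexivity.
      apply (Ccv_scal _ (fun n => Cadd (v b) (Cmul (mkC (- cc) 0) (wn n (act f b))))).
      apply (Ccv_add (fun _ => v b) (fun n => Cmul (mkC (- cc) 0) (wn n (act f b)))). apply Ccv_const.
      apply (Ccv_scal _ (fun n => wn n (act f b))). apply dlim_cv. }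
    pose proof (Ccv_unique _ _ _ H1 H2) as E. rewrite E.
    apply Cx_ext; simpl; field; lra.
Qed.

Definition rr := 1 - cc.

Lemma rr_facts : 1/2 < rr < 1.
Proof. destruct cc_facts as [c1 [c2 _]]. unfold rr. lra. Qed.

Lemma cohen_step x y k : is_dual B x -> exists p : (B -> Cx) * A, is_dual B (fst p) /\
  (forall b, Cadd (Cmul (mkC (rr ^ k) 0) (x b)) (x (act y b)) =
             Cadd (Cmul (mkC (rr ^ S k) 0) (fst p b)) (fst p (act (snd p) b))) /\
  dual_bound B (fun b => Csub (fst p b) (x b)) (cc * (Lam * rr ^ k)) /\
  vnorm (vadd (snd p) (vopp y)) <= cc * (1 + K) * rr ^ k.
Proof.
  intros Hx. destruct cc_facts as [c1 [c2 [c3 c4]]]. pose proof rr_facts as Hrr.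
  assert (Ht : 0 < rr ^ k) by (apply pow_lt; lra).
  destruct (eA y (rr ^ k) Ht) as [i1 Hi1].
  destruct (essential x i1 (rr ^ k) Hx Ht) as [f [Hf Hb]].
  assert (Hfy : vnorm (vadd (amul f y) (vopp y)) <= rr ^ k).
  { apply (Conv_approx i1); auto. intros i Hi. left; apply Hi1; auto. }
  assert (HfK := Conv_norm i1 f Hf).
  destruct (neumann x f Hx HfK) as [w [Hw E]].
  exists (w, vadd (vadd (vscal (mkC rr 0) y) (vscal (mkC cc 0) (amul f y))) (vscal (mkC (cc * rr ^ k) 0) f)).
  simpl. split; [auto|split; [|split]].
  - intro b. rewrite (E b), (E (act y b)).
    rewrite !act_addl, !act_scall, <- act_assoc.
    destruct Hw as [Wa [Ws _]]. rewrite !Wa, !Ws.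
    apply Cx_ext; simpl; unfold rr; ring.
  - set (d := fun b => Csub (w b) (w (act f b))).
    assert (Hd : is_dual B d).
    { replace d with (fadd w (fsc (-1) (dact w f))).
      apply is_dual_fadd; auto. apply is_dual_fsc, dact_is_dual; auto.
      unfold d, Csub. fx; rewrite dact_eq; ring. }
    assert (Hb' : dual_bound B (fun b => Csub (x b) (x (act f b))) (rr ^ k)).
    { replace (fun b => Csub (x b) (x (act f b))) with (fadd x (fsc (-1) (dact x f))); auto.
      unfold Csub. fx; rewrite dact_eq; ring. }
    assert (Hdb : dual_bound B d (Lam * rr ^ k)).
    { apply (neumann_bound (fun b => Csub (x b) (x (act f b))) d f); auto.
      intro b. unfold d. rewrite (E b), (E (act f b)). unfold Csub. apply Cx_ext; simpl; ring. }
    intro b. replace (Csub (w b) (x b)) with (Cmul (mkC cc 0) (d b)).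
    rewrite Cabs_scal_real by lra. rewrite Rmult_assoc. apply Rmult_le_compat_l. lra. apply Hdb.
    unfold d. rewrite (E b). unfold Csub. apply Cx_ext; simpl; ring.
  - rewrite ystep_id by (unfold rr; ring).
    eapply Rle_trans. apply vnorm_triangle. rewrite !vnorm_scal_real.
    rewrite !Rabs_pos_eq by (try apply Rmult_le_pos; lra).
    pose proof (vnorm_nonneg _ f).
    assert (cc * vnorm (vadd (amul f y) (vopp y)) <= cc * rr ^ k) by (apply Rmult_le_compat_l; lra).
    assert (cc * rr ^ k * vnorm f <= cc * rr ^ k * K) by (apply Rmult_le_compat_l; nra).
    nra.
Qed.

Definition cstep (k : nat) (s : (B -> Cx) * A) : (B -> Cx) * A :=
  match excluded_middle_informative (is_dual B (fst s)) with
  | left H => proj1_sig (constructive_indefinite_description _ (cohen_step (fst s) (snd s) k H))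
  | right _ => s end.

Fixpoint cseq (x0 : B -> Cx) (k : nat) : (B -> Cx) * A :=
  match k with O => (x0, vzero) | S m => cstep m (cseq x0 m) end.

Lemma act_zero (b : B) : act (@vzero A) b = vzero.
Proof.
  replace (@vzero A) with (vscal C0 (@vzero A)) by apply vscal_0.
  rewrite act_scall. apply vscal_0.
Qed.

Lemma cstep_spec k s : is_dual B (fst s) ->
  is_dual B (fst (cstep k s)) /\
  (forall b, Cadd (Cmul (mkC (rr ^ k) 0) (fst s b)) (fst s (act (snd s) b)) =
             Cadd (Cmul (mkC (rr ^ S k) 0) (fst (cstep k s) b)) (fst (cstep k s) (act (snd (cstep k s)) b))) /\
  dual_bound B (fun b => Csub (fst (cstep k s) b) (fst s b)) (cc * (Lam * rr ^ k)) /\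
  vnorm (vadd (snd (cstep k s)) (vopp (snd s))) <= cc * (1 + K) * rr ^ k.
Proof.
  intro H. unfold cstep. destruct excluded_middle_informative as [H'|H']; [|contradiction].
  apply (proj2_sig (constructive_indefinite_description _ (cohen_step (fst s) (snd s) k H'))).
Qed.

Lemma cseq_spec x0 : is_dual B x0 -> forall k, is_dual B (fst (cseq x0 k)) /\
  (forall b, x0 b = Cadd (Cmul (mkC (rr ^ k) 0) (fst (cseq x0 k) b)) (fst (cseq x0 k) (act (snd (cseq x0 k)) b))).
Proof.
  intros Hx k. induction k as [|k [IH1 IH2]].
  - simpl. split; auto. intro b. rewrite act_zero, dual_0 by auto. apply Cx_ext; simpl; unfold C0; simpl; ring.
  - destruct (cstep_spec k (cseq x0 k) IH1) as [H1 [H2 _]]. simpl cseq. split; auto.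
    intro b. rewrite <- H2. auto.
Qed.

Lemma cseq_step x0 : is_dual B x0 -> forall k,
  dual_bound B (fun b => Csub (fst (cseq x0 (S k)) b) (fst (cseq x0 k) b)) ((cc * Lam) * rr ^ k) /\
  vnorm (vadd (snd (cseq x0 (S k))) (vopp (snd (cseq x0 k)))) <= cc * (1 + K) * rr ^ k.
Proof.
  intros Hx k. destruct (cseq_spec x0 Hx k) as [H1 _].
  destruct (cstep_spec k (cseq x0 k) H1) as [_ [_ [H3 H4]]]. simpl cseq.
  split; auto. rewrite Rmult_assoc; auto.
Qed.

Lemma Cx_close z w : (forall eps, 0 < eps -> Cabs (Csub z w) <= eps) -> z = w.
Proof.
  intro H. apply Csub_eq0. apply Rle_antisym; [|apply Cabs_nonneg].
  apply Rnot_lt_le; intro H'. specialize (H (Cabs (Csub z w) / 2) ltac:(lra)). lra.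
Qed.

Theorem factor x0 : is_dual B x0 -> exists c' a, is_dual B c' /\ forall b, x0 b = dual_act A B c' a b.
Proof.
  intros Hx. destruct cc_facts as [c1 [c2 [c3 c4]]]. pose proof rr_facts as Hrr.
  set (xs := fun k => fst (cseq x0 k)). set (ys := fun k => snd (cseq x0 k)).
  set (C := cc * Lam). assert (HC : 0 <= C) by (unfold C; nra).
  assert (Hr : 0 <= rr < 1) by lra.
  assert (Hstep : forall n, dual_bound B (fun b => Csub (xs (S n) b) (xs n b)) (C * rr ^ n)).
  { intro n. apply (cseq_step x0 Hx n). }
  assert (Hxs : forall n, is_dual B (xs n)) by (intro n; apply (cseq_spec x0 Hx n)).
  set (xinf := dlim B xs C rr Hr HC Hstep).
  assert (Hxinf : is_dual B xinf) by (apply dlim_dual; auto).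
  set (C' := cc * (1 + K)). assert (HC' : 0 <= C') by (unfold C'; nra).
  assert (Hys : forall n m, (n <= m)%nat -> vnorm (vadd (ys n) (vopp (ys m))) <= C' * (rr ^ n - rr ^ m) / (1 - rr)).
  { apply (geo_tel (fun a a' => vnorm (vadd a (vopp a')))).
    - intros; apply vnorm_sub_tri.
    - intros; rewrite vadd_opp, vnorm_0; lra.
    - auto.
    - intro n. rewrite vnorm_sub_sym. apply (cseq_step x0 Hx n). }
  destruct (vcomplete A ys) as [a Ha].
  { intros eps He. destruct (pow_small rr (eps * (1 - rr) / (C' + 1))) as [N HN]; auto.
    { apply Rdiv_lt_0_compat; nra. }
    exists N.
    assert (forall n m, (N <= n)%nat -> (n <= m)%nat -> vnorm (vadd (ys n) (vopp (ys m))) < eps).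
    { intros n m Hn Hm. eapply Rle_lt_trans. apply Hys; auto.
      specialize (HN n Hn). pose proof (pow_le1 rr m ltac:(lra)). pose proof (pow_le1 rr n ltac:(lra)).
      apply Rle_lt_trans with ((C' + 1) * rr ^ n / (1 - rr)).
      unfold Rdiv. apply Rmult_le_compat_r. left; apply Rinv_0_lt_compat; lra. nra.
      apply Rmult_lt_reg_r with ((1 - rr) / (C' + 1)). apply Rdiv_lt_0_compat; lra.
      replace ((C' + 1) * rr ^ n / (1 - rr) * ((1 - rr) / (C' + 1))) with (rr ^ n) by (field; lra).
      replace (eps * ((1 - rr) / (C' + 1))) with (eps * (1 - rr) / (C' + 1)) by (field; lra). auto. }
    intros m n Hm Hn. destruct (Nat.le_gt_cases m n). apply H; auto.
    rewrite vnorm_sub_sym. apply H; lia. }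
  exists xinf, a. split; auto.
  destruct (dual_bound_exists _ xinf Hxinf) as [Xi [HXi BXi]].
  set (Y := C' / (1 - rr)).
  assert (HY : forall k, vnorm (ys k) <= Y).
  { intro k. pose proof (Hys 0%nat k ltac:(lia)). rewrite vnorm_sub_sym in H.
    replace (ys 0%nat) with (@vzero A) in H by reflexivity. rewrite vopp_0, vadd_0 in H.
    eapply Rle_trans. apply H. simpl. pose proof (pow_le1 rr k ltac:(lra)). unfold Y, Rdiv.
    apply Rmult_le_compat_r. left; apply Rinv_0_lt_compat; lra. nra. }
  assert (HYp : 0 <= Y) by (unfold Y; apply Rdiv_le_0_compat; lra).
  assert (Htail : forall k, dual_bound B (fun b => Csub (xinf b) (xs k b)) (C * rr ^ k / (1 - rr))).
  { intro k. apply dlim_tail. }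
  intro b. unfold dual_act, adj1. apply Cx_close. intros eps He.
  set (nb := vnorm b). assert (Hnb : 0 <= nb) by apply vnorm_nonneg.
  set (Mt := (Xi + C / (1 - rr)) * nb + C / (1 - rr) * Y * nb + Xi * nb + 1).
  assert (HMt : 1 <= Mt).
  { unfold Mt. assert (0 <= C / (1 - rr)) by (apply Rdiv_le_0_compat; lra).
    assert (0 <= C / (1 - rr) * Y) by nra. nra. }
  set (dl := eps / Mt). assert (Hdl : 0 < dl) by (unfold dl; apply Rdiv_lt_0_compat; lra).
  destruct (pow_small rr dl Hr Hdl) as [N1 HN1].
  destruct (Ha dl Hdl) as [N2 HN2].
  set (k := max N1 N2). specialize (HN1 k ltac:(lia)). specialize (HN2 k ltac:(lia)).
  destruct (cseq_spec x0 Hx k) as [_ Ek]. rewrite (Ek b). fold (xs k) (ys k).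
  assert (Hk1 : Cabs (xs k b) <= (Xi + C / (1 - rr)) * nb).
  { pose proof (Htail k b) as T. pose proof (BXi b).
    replace (xs k b) with (Cadd (xinf b) (mkC (- Re (Csub (xinf b) (xs k b))) (- Im (Csub (xinf b) (xs k b)))))
      by (unfold Csub; cx).
    eapply Rle_trans. apply Cabs_triangle. rewrite Cabs_opp.
    pose proof (pow_le1 rr k ltac:(lra)).
    assert (C * rr ^ k / (1 - rr) <= C / (1 - rr)).
    { unfold Rdiv. apply Rmult_le_compat_r. left; apply Rinv_0_lt_compat; lra. nra. }
    fold nb in T, H. assert (C * rr ^ k / (1 - rr) * nb <= C / (1 - rr) * nb) by nra. nra. }
  assert (Hk2 : Cabs (Csub (xs k (act (ys k) b)) (xinf (act (ys k) b))) <= C / (1 - rr) * Y * nb * dl).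
  { rewrite Csub_sym. eapply Rle_trans. apply Htail.
    assert (vnorm (act (ys k) b) <= Y * nb).
    { eapply Rle_trans. apply act_norm. apply Rmult_le_compat_r; auto. }
    assert (0 <= C / (1 - rr)) by (apply Rdiv_le_0_compat; lra).
    pose proof (pow_le rr k ltac:(lra)).
    replace (C * rr ^ k / (1 - rr)) with (C / (1 - rr) * rr ^ k) by (field; lra).
    pose proof (vnorm_nonneg _ (act (ys k) b)).
    apply Rle_trans with (C / (1 - rr) * dl * (Y * nb)).
    - apply Rmult_le_compat. nra. auto. apply Rmult_le_compat_l; lra. auto.
    - right; ring. }
  assert (Hk3 : Cabs (Csub (xinf (act (ys k) b)) (xinf (act a b))) <= Xi * nb * dl).
  { replace (Csub (xinf (act (ys k) b)) (xinf (act a b))) with (xinf (act (vadd (ys k) (vopp a)) b)).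
    - eapply Rle_trans. apply BXi. eapply Rle_trans. apply Rmult_le_compat_l; auto. apply act_norm.
      replace (Xi * nb * dl) with (Xi * (dl * nb)) by ring. apply Rmult_le_compat_l; auto.
      apply Rmult_le_compat_r; auto. lra.
    - rewrite act_addl, <- vscal_m1, act_scall, vscal_m1, dual_sub by auto. reflexivity. }
  assert (Hsplit : Csub (Cadd (Cmul (mkC (rr ^ k) 0) (xs k b)) (xs k (act (ys k) b))) (xinf (act a b)) =
    Cadd (Cmul (mkC (rr ^ k) 0) (xs k b))
      (Cadd (Csub (xs k (act (ys k) b)) (xinf (act (ys k) b))) (Csub (xinf (act (ys k) b)) (xinf (act a b)))))
    by (unfold Csub; cx).
  rewrite Hsplit. eapply Rle_trans. apply Cabs_triangle. eapply Rle_trans. apply Rplus_le_compat_l. apply Cabs_triangle.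
  rewrite Cabs_scal_real by (apply pow_le; lra).
  assert (rr ^ k * Cabs (xs k b) <= dl * ((Xi + C / (1 - rr)) * nb)).
  { apply Rmult_le_compat; auto. apply pow_le; lra. apply Cabs_nonneg. lra. }
  assert (dl * Mt = eps) by (unfold dl; field; lra).
  unfold Mt in H0. nra.
Qed.

End Main.


Theorem mainTheorem12 (A : BanachAlgebra) (B : BanachLeftModule A) :
  has_bounded_left_approx_identity A B ->
  (* wap_l(B) = B^* *)
  (forall b' : B -> Cx, is_dual B b' <-> in_wap_l A B b') ->
  (* B^* A = B^* *)
  (forall (c' : B -> Cx) (a : A), is_dual B c' -> is_dual B (dual_act A B c' a)) /\
  (forall b' : B -> Cx, is_dual B b' ->
     exists (c' : B -> Cx) (a : A), is_dual B c' /\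
       forall b : B, b' b = dual_act A B c' a b).
Proof.
  intros HBL Hwap. split.
  - intros c' a Hc. apply dact_is_dual; auto.
  - intros b' Hb'. destruct (classic (exists b : B, 0 < vnorm b)) as [Bnt|Bt].
    + destruct HBL as [I [le [e [[i0 _] [Hrefl [Htrans [Hdir [[M HM] [HeA HeB]]]]]]]]].
      assert (eK : forall i, vnorm (e i) <= Rabs M + 1).
      { intro i. pose proof (HM i). pose proof (RRle_abs M). lra. }
      assert (Kpos : 0 < Rabs M + 1) by (pose proof (Rabs_pos M); lra).
      apply (factor A B I le e i0 Hrefl Htrans Hdir (Rabs M + 1) Kpos eK HeA HeB); auto.
      intros z Hz. apply Hwap; auto.
    + assert (Hz : forall b : B, b = vzero).
      { intro b. apply vnorm_eq0. pose proof (vnorm_nonneg _ b).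
        destruct (Rle_or_lt (vnorm b) 0). lra. exfalso; apply Bt; eauto. }
      exists b', vzero. split; auto. intro b. unfold dual_act, adj1.
      rewrite (Hz b). f_equal. symmetry. apply Hz.
Qed.
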